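(* Let $\mathcal A=\{A_i\}_{i\in\Lambda}$ be a finite collection of $SL_2(\mathbb R)$ matrices with a strictly invariant multicone $U\subset[0,\pi)$, and let $\Phi=\{\varphi_i\}_{i\in\Lambda}$, $\varphi_i=\varphi_{A_i}$, be the induced IFS. Let $c>0$, $\lambda>1$ be constants with $\|A_{\mathbf i}\|\ge c\lambda^n$ for all $\mathbf i\in\Lambda^n$, $n\in\mathbb N$ (such constants exist). Then: (i) (Bounded distortion) there exists $C'>1$ such that $\frac1{C'}\le\frac{|\varphi_{\mathbf i}'(x)|}{|\varphi_{\mathbf i}'(y)|}\le C'$ for all $x,y\in\overline U$, $\mathbf i\in\Lambda^n$, $n\in\mathbb N$; (ii) there exists $C''>0$ such that $\|\varphi_{\mathbf i}'\|_{\overline U}\le C''\lambda^{-2n}$ for all $\mathbf i\in\Lambda^n$, $n\in\mathbb N$; in particular $\Phi^k$ is contractive on $U$ in the metric of $\mathbb R/\pi\mathbb Z$ for all sufficiently large $k$; (iii) $s=s_{\mathcal A}/2$, where $s$ is the solution of $P_\Phi(s)=0$ and $s_{\mathcal A}$ is the critical exponent.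
   Context: $\mathbb{RP}^1$ is identified with $[0,\pi)\cong\mathbb R/\pi\mathbb Z$ with its metric; $\varphi_A$ is the induced action of $A$ and derivatives are taken in this coordinate. A multicone is a proper nonempty open subset of $\mathbb{RP}^1$ with finitely many components having pairwise disjoint closures; it is strictly invariant if $\varphi_i(\overline U)\subset U$ for all $i$. For $\mathbf i=i_1\ldots i_n$, $A_{\mathbf i}=A_{i_1}\cdots A_{i_n}$ and $\varphi_{\mathbf i}=\varphi_{i_1}\circ\cdots\circ\varphi_{i_n}$; $\|\cdot\|_{\overline U}$ is the sup norm on $\overline U$. Pressure: $P_\Phi(t)=\lim_n\frac1n\log\sum_{\mathbf i\in\Lambda^n}\|\varphi_{\mathbf i}'\|_{\overline U}^t$. Critical exponent: $s_{\mathcal A}=\sup\{t\ge0:\sum_{n\ge1}\sum_{\mathbf i\in\Lambda^n}\|A_{\mathbf i}\|^{-t}=\infty\}$. *)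

(* Defs.v *)
From Stdlib Require Import Reals Lra List.
From Coquelicot Require Import Coquelicot.
Import ListNotations.
Open Scope R_scope.

Record mat2 := Mat2 { a11 : R; a12 : R; a21 : R; a22 : R }.

Definition det2 (A : mat2) : R := a11 A * a22 A - a12 A * a21 A.

Definition mmul (A B : mat2) : mat2 :=
  Mat2 (a11 A * a11 B + a12 A * a21 B) (a11 A * a12 B + a12 A * a22 B)
       (a21 A * a11 B + a22 A * a21 B) (a21 A * a12 B + a22 A * a22 B).

Definition mid : mat2 := Mat2 1 0 0 1.

Definition apply_x (A : mat2) (t : R) : R := a11 A * cos t + a12 A * sin t.
Definition apply_y (A : mat2) (t : R) : R := a21 A * cos t + a22 A * sin t.

Definition opnorm (A : mat2) : R :=
  real (Lub_Rbar (fun r => exists t, r = sqrt (apply_x A t ^ 2 + apply_y A t ^ 2))).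

(** angle in [0, pi) of the line spanned by (x, y) *)
Definition line_angle (x y : R) : R :=
  if Req_EM_T x 0 then PI / 2
  else let a := atan (y / x) in if Rlt_dec a 0 then a + PI else a.

(** the induced action phi_A on RP^1 = [0,pi) = R / pi Z (defined on all of R) *)
Definition phiA (A : mat2) (t : R) : R := line_angle (apply_x A t) (apply_y A t).

(** representative of d modulo pi in [-pi/2, pi/2) (signed displacement in R/piZ) *)
Definition wrapd (d : R) : R := d - PI * IZR (up (d / PI - / 2)).

(** derivative of a self-map f of R/piZ at t, in the coordinate of R/piZ *)
Definition dcirc (f : R -> R) (t : R) : R :=
  Derive (fun h => wrapd (f (t + h) - f t)) 0.

(** words over Lambda = {0,...,m-1} *)
Definition is_word (m n : nat) (w : list nat) : Prop :=
  length w = n /\ List.Forall (fun i => (i < m)%nat) w.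

Fixpoint all_words (m n : nat) : list (list nat) :=
  match n with
  | O => [ [] ]
  | S n' => concat (map (fun i => map (cons i) (all_words m n')) (seq 0 m))
  end.

Definition sum_words (m n : nat) (f : list nat -> R) : R :=
  fold_right Rplus 0 (map f (all_words m n)).

Definition matw (A : nat -> mat2) (w : list nat) : mat2 :=
  fold_right (fun i M => mmul (A i) M) mid w.

Definition phiw (A : nat -> mat2) (w : list nat) : R -> R :=
  fold_right (fun i g => fun t => phiA (A i) (g t)) (fun t => t) w.

(** multicone (as a pi-periodic subset of R): a nonempty proper union of finitely
    many open arcs of R/piZ whose closures are pairwise disjoint *)
Definition in_arc (a b x : R) : Prop := exists z : Z, a < x + IZR z * PI < b.
Definition in_carc (a b x : R) : Prop := exists z : Z, a <= x + IZR z * PI <= b.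

Definition multicone (U : R -> Prop) : Prop :=
  exists arcs : list (R * R),
    arcs <> [] /\
    List.Forall (fun p => fst p < snd p) arcs /\
    (forall x, U x <-> exists p, In p arcs /\ in_arc (fst p) (snd p) x) /\
    (forall k l, (k < length arcs)%nat -> (l < length arcs)%nat -> k <> l ->
       forall x, ~ (in_carc (fst (nth k arcs (0,0))) (snd (nth k arcs (0,0))) x /\
                    in_carc (fst (nth l arcs (0,0))) (snd (nth l arcs (0,0))) x)) /\
    (exists x, ~ U x).

(** closure (in R, equivalently in R/piZ since U is pi-periodic) *)
Definition closure_set (U : R -> Prop) (x : R) : Prop :=
  forall eps, 0 < eps -> exists y, U y /\ Rabs (x - y) < eps.

Definition strictly_invariant (m : nat) (A : nat -> mat2) (U : R -> Prop) : Prop :=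
  forall i, (i < m)%nat -> forall x, closure_set U x -> U (phiA (A i) x).

Definition supnorm (U : R -> Prop) (f : R -> R) : R :=
  real (Lub_Rbar (fun r => exists x, closure_set U x /\ r = Rabs (f x))).

Definition pressure_zero (m : nat) (A : nat -> mat2) (U : R -> Prop) (t : R) : Prop :=
  is_lim_seq (fun n => / INR n *
     ln (sum_words m n (fun w => Rpower (supnorm U (dcirc (phiw A w))) t))) 0.

Definition crit_exp (m : nat) (A : nat -> mat2) : Rbar :=
  Lub_Rbar (fun t => 0 <= t /\
     ~ ex_series (fun n => sum_words m (S n) (fun w => Rpower (opnorm (matw A w)) (- t)))).

(* Main.v *)
Require Import Defs.
From Stdlib Require Import Reals List Lra Lia.
From Coquelicot Require Import Coquelicot.
Open Scope R_scope.


Lemma polar (x y : R) : exists r, x = r * cos (line_angle x y) /\ y = r * sin (line_angle x y).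
Proof.
  unfold line_angle. destruct (Req_EM_T x 0) as [Hx|Hx].
  - exists y. rewrite cos_PI2, sin_PI2. split; lra.
  - set (a := atan (y / x)).
    assert (Hc : 0 < cos a) by (destruct (atan_bound (y/x)); apply cos_gt_0; unfold a; lra).
    assert (Ht : sin a / cos a = y / x) by (unfold a; exact (tan_atan (y/x))).
    assert (Hs : sin a = cos a * (y / x)) by (rewrite <- Ht; field; lra).
    destruct (Rlt_dec a 0).
    + exists (- (x / cos a)). rewrite neg_cos, neg_sin. split.
      * field; lra.
      * rewrite Hs. field. split; lra.
    + exists (x / cos a). split.
      * field; lra.
      * rewrite Hs. field. split; lra.
Qed.

Lemma polar_norm (x y r t : R) : x = r * cos t -> y = r * sin t -> x ^ 2 + y ^ 2 = r ^ 2.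
Proof.
  intros -> ->. pose proof (sin2_cos2 t). unfold Rsqr in H.
  replace ((r * cos t) ^ 2 + (r * sin t) ^ 2) with (r^2 * (sin t * sin t + cos t * cos t)) by ring.
  rewrite H; ring.
Qed.

Lemma apply_x_mmul P Q a : apply_x (mmul P Q) a = a11 P * apply_x Q a + a12 P * apply_y Q a.
Proof. unfold apply_x, apply_y, mmul; simpl; ring. Qed.
Lemma apply_y_mmul P Q a : apply_y (mmul P Q) a = a21 P * apply_x Q a + a22 P * apply_y Q a.
Proof. unfold apply_x, apply_y, mmul; simpl; ring. Qed.

Lemma det2_mmul P Q : det2 (mmul P Q) = det2 P * det2 Q.
Proof. unfold det2, mmul; simpl; ring. Qed.

Lemma cross_id M a b :
  apply_x M a * apply_y M b - apply_y M a * apply_x M b = det2 M * sin (b - a).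
Proof. unfold apply_x, apply_y, det2. rewrite sin_minus. ring. Qed.

Lemma vec_struct (A : nat -> mat2) (w : list nat) (a : R) :
  exists r, apply_x (matw A w) a = r * cos (phiw A w a) /\
            apply_y (matw A w) a = r * sin (phiw A w a).
Proof.
  induction w as [|i w IH]; simpl.
  - exists 1. unfold apply_x, apply_y, mid; simpl. split; ring.
  - destruct IH as [r [H1 H2]].
    unfold phiA.
    destruct (polar (apply_x (A i) (phiw A w a)) (apply_y (A i) (phiw A w a))) as [r' [H3 H4]].
    exists (r * r'). rewrite apply_x_mmul, apply_y_mmul, H1, H2.
    split.
    + transitivity (r * apply_x (A i) (phiw A w a)); [unfold apply_x; ring|].
      rewrite H3 at 1. ring.
    + transitivity (r * apply_y (A i) (phiw A w a)); [unfold apply_y; ring|].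
      rewrite H4 at 1. ring.
Qed.

Lemma det_matw m A w : (forall i, (i < m)%nat -> det2 (A i) = 1) ->
  List.Forall (fun i => (i < m)%nat) w -> det2 (matw A w) = 1.
Proof.
  intros HA Hw. induction Hw as [|j l Hj Hl IH]; simpl.
  - unfold det2, mid; simpl; ring.
  - rewrite det2_mmul, IH, (HA j Hj); ring.
Qed.

Definition Nv (M : mat2) (t : R) : R := sqrt (apply_x M t ^ 2 + apply_y M t ^ 2).

Lemma wrapd_prop d : exists k : Z, wrapd d = d - IZR k * PI /\ - (PI / 2) <= wrapd d < PI / 2.
Proof.
  unfold wrapd. exists (up (d / PI - / 2)). split; [ring|].
  destruct (archimed (d / PI - / 2)) as [H1 H2].
  pose proof PI_RGT_0.
  set (u := IZR (up (d / PI - / 2))) in *.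
  assert (E : d = PI * (d / PI)) by (field; lra).
  split.
  - assert (u <= d / PI + /2) by lra.
    apply Rmult_le_compat_l with (r := PI) in H0; [|lra]. nra.
  - apply Rmult_lt_compat_l with (r := PI) in H1; [|lra]. nra.
Qed.

Lemma wrapd_atan d r S D : r * sin d = S -> r * cos d = D -> 0 < D -> wrapd d = atan (S / D).
Proof.
  intros HS HD HDp.
  destruct (wrapd_prop d) as [k [Hk Hb]].
  set (de := wrapd d) in *.
  assert (Hs0 : sin (de - d) = 0).
  { apply sin_eq_0_1. exists (- k)%Z. rewrite Hk, opp_IZR. ring. }
  rewrite sin_minus in Hs0.
  assert (E : sin de * D = cos de * S).
  { rewrite <- HS, <- HD. transitivity (r * (sin de * cos d)); [ring|].
    replace (sin de * cos d) with (cos de * sin d) by lra. ring. }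
  assert (Hc : 0 <= cos de) by (apply cos_ge_0; lra).
  assert (Hc' : 0 < cos de).
  { destruct Hc as [Hc|Hc]; auto. exfalso. rewrite <- Hc in E.
    assert (sin de = 0) by (apply Rmult_eq_reg_r with D; lra).
    pose proof (sin2_cos2 de). unfold Rsqr in H0. rewrite H, <- Hc in H0. lra. }
  assert (Hde : - (PI / 2) < de).
  { destruct (Rle_lt_or_eq_dec _ _ (proj1 Hb)) as [h|h]; auto.
    rewrite <- h in Hc'. rewrite cos_neg, cos_PI2 in Hc'. lra. }
  rewrite <- (atan_tan de) by lra. f_equal. unfold tan.
  field_simplify_eq; try lra.
Qed.

Lemma img_nonzero M t : det2 M = 1 -> 0 < apply_x M t ^ 2 + apply_y M t ^ 2.
Proof.
  intros Hd. pose proof (cross_id M t (t + PI/2)) as H.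
  rewrite Hd in H. replace (t + PI / 2 - t) with (PI/2) in H by ring. rewrite sin_PI2 in H.
  destruct (Req_dec (apply_x M t) 0) as [h1|h1].
  - destruct (Req_dec (apply_y M t) 0) as [h2|h2].
    + rewrite h1, h2 in H. lra.
    + assert (0 < apply_y M t ^ 2) by (apply pow2_gt_0; auto). nra.
  - assert (0 < apply_x M t ^ 2) by (apply pow2_gt_0; auto). nra.
Qed.

Lemma dcirc_matw A w t : det2 (matw A w) = 1 ->
  dcirc (phiw A w) t = / (apply_x (matw A w) t ^ 2 + apply_y (matw A w) t ^ 2).
Proof.
  intros Hd. unfold dcirc.
  set (M := matw A w) in *.
  set (X := apply_x M t). set (Y := apply_y M t).
  set (D := fun h => X * (a11 M * cos (t + h) + a12 M * sin (t + h)) + Y * (a21 M * cos (t + h) + a22 M * sin (t + h))).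
  assert (HD0 : D 0 = X ^ 2 + Y ^ 2).
  { unfold D, X, Y, apply_x, apply_y. rewrite Rplus_0_r. ring. }
  assert (Hpos : 0 < X ^ 2 + Y ^ 2) by (apply img_nonzero; auto).
  assert (Heq : forall h, 0 < D h -> wrapd (phiw A w (t + h) - phiw A w t) = atan (sin h / D h)).
  { intros h Hh.
    destruct (vec_struct A w t) as [r1 [E1 E2]].
    destruct (vec_struct A w (t + h)) as [r2 [E3 E4]].
    apply (wrapd_atan _ (r1 * r2)); auto.
    - pose proof (cross_id M t (t + h)) as C. rewrite Hd in C.
      replace (t + h - t) with h in C by ring. rewrite Rmult_1_l in C. rewrite <- C.
      fold M in E1, E2, E3, E4. rewrite E1, E2, E3, E4. rewrite sin_minus. ring.
    - unfold D. fold X Y. 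
      change (a11 M * cos (t + h) + a12 M * sin (t + h)) with (apply_x M (t + h)).
      change (a21 M * cos (t + h) + a22 M * sin (t + h)) with (apply_y M (t + h)).
      unfold X, Y. fold M in E1, E2, E3, E4. rewrite E1, E2, E3, E4. rewrite cos_minus. ring. }
  assert (Hloc : locally 0 (fun h => wrapd (phiw A w (t + h) - phiw A w t) = atan (sin h / D h))).
  { assert (Hc : continuous D 0).
    { apply (ex_derive_continuous (K:=R_AbsRing) (V:=R_NormedModule)). unfold D. auto_derive. auto. }
    pose proof (proj1 (filterlim_locally _ _) Hc (mkposreal _ Hpos)) as Hc2.
    destruct Hc2 as [e He]. exists e. intros y Hy. apply Heq.
    specialize (He y Hy). simpl in He. unfold ball in He; simpl in He. unfold AbsRing_ball in He.
    simpl in He. unfold abs, minus, plus, opp in He; simpl in He.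
    rewrite HD0 in He. apply Rabs_lt_between in He. lra. }
  etransitivity; [exact (Derive_ext_loc _ _ _ Hloc)|].
  apply is_derive_unique.
  unfold D.
  auto_derive.
  - fold (D 0). lra.
  - rewrite sin_0, cos_0. fold (D 0). rewrite HD0. field. lra.
Qed.

Lemma lub_ub (E : R -> Prop) (B x : R) : E x -> (forall y, E y -> y <= B) -> x <= real (Lub_Rbar E).
Proof.
  intros Hx HB. destruct (Lub_Rbar_correct E) as [H1 H2].
  assert (Hb : Rbar_le (Lub_Rbar E) (Finite B)) by (apply H2; intros y Hy; apply HB; auto).
  specialize (H1 x Hx). destruct (Lub_Rbar E); simpl in *; tauto.
Qed.

Lemma lub_le (E : R -> Prop) (b : R) : (exists x, E x) -> (forall y, E y -> y <= b) -> real (Lub_Rbar E) <= b.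
Proof.
  intros [x Hx] HB. destruct (Lub_Rbar_correct E) as [H1 H2].
  assert (Hb : Rbar_le (Lub_Rbar E) (Finite b)) by (apply H2; intros y Hy; apply HB; auto).
  specialize (H1 x Hx). destruct (Lub_Rbar E); simpl in *; tauto.
Qed.

Lemma Nv_sq M t : Nv M t ^ 2 = apply_x M t ^ 2 + apply_y M t ^ 2.
Proof. unfold Nv. rewrite <- Rsqr_pow2. apply Rsqr_sqrt. nra. Qed.

Lemma Nv_pos M t : 0 <= Nv M t.
Proof. apply sqrt_pos. Qed.

Definition Fb (M : mat2) := sqrt (a11 M ^ 2 + a12 M ^ 2 + a21 M ^ 2 + a22 M ^ 2).

Lemma cs_ineq a b t : (a * cos t + b * sin t) ^ 2 <= a ^ 2 + b ^ 2.
Proof. pose proof (sin2_cos2 t). unfold Rsqr in H. pose proof (pow2_ge_0 (a * sin t - b * cos t)).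
  replace (a ^ 2 + b ^ 2) with ((a ^ 2 + b ^ 2) * (sin t * sin t + cos t * cos t)) by (rewrite H; ring). nra. Qed.

Lemma Nv_le_Fb M t : Nv M t <= Fb M.
Proof.
  unfold Nv, Fb. apply sqrt_le_1_alt. unfold apply_x, apply_y.
  pose proof (cs_ineq (a11 M) (a12 M) t). pose proof (cs_ineq (a21 M) (a22 M) t). lra.
Qed.

Lemma opnorm_ge M t : Nv M t <= opnorm M.
Proof.
  unfold opnorm. apply (lub_ub _ (Fb M)).
  - exists t. reflexivity.
  - intros y [s ->]. apply Nv_le_Fb.
Qed.

Lemma opnorm_le M b : (forall t, Nv M t <= b) -> opnorm M <= b.
Proof.
  intros H. unfold opnorm. apply lub_le.
  - exists (Nv M 0), 0. reflexivity.
  - intros y [s ->]. apply H.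
Qed.

Lemma cross_le x1 y1 x2 y2 : Rabs (x1 * y2 - y1 * x2) <= sqrt (x1^2 + y1^2) * sqrt (x2^2+y2^2).
Proof.
  rewrite <- sqrt_mult by nra. rewrite <- (sqrt_pow2 (Rabs _)) by apply Rabs_pos.
  apply sqrt_le_1_alt. rewrite pow2_abs. pose proof (pow2_ge_0 (x1 * x2 + y1 * y2)). nra.
Qed.

Lemma Nv_cross M a b : Rabs (det2 M * sin (b - a)) <= Nv M a * Nv M b.
Proof. rewrite <- cross_id. apply cross_le. Qed.

Lemma Nv_lower M t : det2 M = 1 -> 1 <= Nv M t * Fb M.
Proof.
  intros Hd. pose proof (Nv_cross M t (t + PI/2)) as H. rewrite Hd in H.
  replace (t + PI / 2 - t) with (PI/2) in H by ring. rewrite sin_PI2, Rmult_1_l, Rabs_R1 in H.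
  pose proof (Nv_le_Fb M (t + PI/2)). pose proof (Nv_pos M t). nra.
Qed.

Lemma Fb_pos M : det2 M = 1 -> 0 < Fb M.
Proof. intros Hd. pose proof (Nv_lower M 0 Hd). pose proof (Nv_pos M 0).
  unfold Fb in *. pose proof (sqrt_pos (a11 M ^ 2 + a12 M ^ 2 + a21 M ^ 2 + a22 M ^ 2)).
  destruct H1; auto. rewrite <- H1 in H. lra. Qed.

Lemma Nv_gt0 M t : det2 M = 1 -> 0 < Nv M t.
Proof. intros Hd. pose proof (Nv_lower M t Hd). pose proof (Nv_pos M t).
  destruct H0; auto. rewrite <- H0 in H. lra. Qed.

Lemma Nv_polar M t r th : apply_x M t = r * cos th -> apply_y M t = r * sin th -> Nv M t = Rabs r.
Proof.
  intros H1 H2. unfold Nv. rewrite (polar_norm _ _ r th H1 H2). rewrite <- pow2_abs.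
  apply sqrt_pow2. apply Rabs_pos.
Qed.

Definition sd (a b : R) : R := Rabs (sin (a - b)).

Lemma sd_sym a b : sd a b = sd b a.
Proof. unfold sd. replace (b - a) with (- (a - b)) by ring. rewrite sin_neg, Rabs_Ropp. auto. Qed.

Lemma sd_pos a b : 0 <= sd a b.
Proof. apply Rabs_pos. Qed.

Lemma sd_triangle a b c : sd a c <= sd a b + sd b c.
Proof.
  unfold sd. replace (a - c) with ((a - b) + (b - c)) by ring. rewrite sin_plus.
  eapply Rle_trans; [apply Rabs_triang|]. rewrite !Rabs_mult.
  pose proof (COS_bound (b - c)). pose proof (COS_bound (a - b)).
  assert (Rabs (cos (b - c)) <= 1) by (apply Rabs_le; lra).
  assert (Rabs (cos (a - b)) <= 1) by (apply Rabs_le; lra).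
  pose proof (Rabs_pos (sin (a - b))). pose proof (Rabs_pos (sin (b - c))). nra.
Qed.

Lemma sd_le1 a b : sd a b <= 1.
Proof. unfold sd. pose proof (SIN_bound (a - b)). apply Rabs_le; lra. Qed.

Lemma word_identity A w a b : det2 (matw A w) = 1 ->
  Nv (matw A w) a * Nv (matw A w) b * sd (phiw A w a) (phiw A w b) = sd a b.
Proof.
  intros Hd.
  destruct (vec_struct A w a) as [ra [E1 E2]].
  destruct (vec_struct A w b) as [rb [E3 E4]].
  rewrite (Nv_polar _ _ _ _ E1 E2), (Nv_polar _ _ _ _ E3 E4).
  pose proof (cross_id (matw A w) a b) as C. rewrite Hd, E1, E2, E3, E4 in C.
  assert (C' : ra * rb * sin (phiw A w b - phiw A w a) = sin (b - a)).
  { rewrite sin_minus. rewrite Rmult_1_l in C. rewrite <- C. ring. }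
  rewrite (sd_sym a b), (sd_sym (phiw A w a)). unfold sd.
  rewrite <- C', !Rabs_mult. ring.
Qed.

Lemma mat_eq (P Q : mat2) : a11 P = a11 Q -> a12 P = a12 Q -> a21 P = a21 Q -> a22 P = a22 Q -> P = Q.
Proof. destruct P, Q; simpl; intros; subst; auto. Qed.

Lemma matw_app A u v : matw A (u ++ v) = mmul (matw A u) (matw A v).
Proof.
  induction u as [|i u IH]; simpl.
  - apply mat_eq; unfold mmul, mid; simpl; ring.
  - rewrite IH. apply mat_eq; unfold mmul; simpl; ring.
Qed.

Lemma phiw_app A u v t : phiw A (u ++ v) t = phiw A u (phiw A v t).
Proof. induction u as [|i u IH]; simpl; auto. rewrite IH. auto. Qed.

Lemma Nv_app A u v t : Nv (matw A (u ++ v)) t = Nv (matw A u) (phiw A v t) * Nv (matw A v) t.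
Proof.
  rewrite matw_app.
  destruct (vec_struct A v t) as [r [E1 E2]].
  rewrite (Nv_polar _ _ _ _ E1 E2).
  unfold Nv. rewrite apply_x_mmul, apply_y_mmul, E1, E2.
  set (th := phiw A v t).
  replace ((a11 (matw A u) * (r * cos th) + a12 (matw A u) * (r * sin th)) ^ 2 +
           (a21 (matw A u) * (r * cos th) + a22 (matw A u) * (r * sin th)) ^ 2)
    with ((apply_x (matw A u) th ^ 2 + apply_y (matw A u) th ^ 2) * Rabs r ^ 2)
    by (rewrite pow2_abs; unfold apply_x, apply_y; ring).
  rewrite sqrt_mult by (try apply pow2_ge_0; nra).
  rewrite sqrt_pow2 by apply Rabs_pos. auto.
Qed.

Lemma Rabs_sin_pos v : 0 < v -> Rabs (sin v) <= v.
Proof.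
  intros hv. pose proof (sin_lt_x v hv). apply Rabs_le. split; [|lra].
  destruct (Rle_dec v PI).
  - pose proof (sin_ge_0 v). lra.
  - pose proof (SIN_bound v). pose proof PI_RGT_0. pose proof (PI2_1). lra.
Qed.

Lemma Rabs_sin_le u : Rabs (sin u) <= Rabs u.
Proof.
  destruct (Rtotal_order u 0) as [h|[h|h]].
  - rewrite (Rabs_left u h). pose proof (Rabs_sin_pos (- u) ltac:(lra)) as H.
    rewrite sin_neg, Rabs_Ropp in H. exact H.
  - subst. rewrite sin_0, Rabs_R0. lra.
  - rewrite (Rabs_right u) by lra. apply Rabs_sin_pos; auto.
Qed.

Lemma sd_le_abs a b : sd a b <= Rabs (a - b).
Proof. apply Rabs_sin_le. Qed.

Lemma sin_kPI (z : Z) : sin (IZR z * PI) = 0.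
Proof. apply sin_eq_0_1. eauto. Qed.

Lemma cos_kPI_abs (z : Z) : Rabs (cos (IZR z * PI)) = 1.
Proof.
  pose proof (sin2_cos2 (IZR z * PI)). rewrite sin_kPI in H. unfold Rsqr in H.
  assert (cos (IZR z * PI) * cos (IZR z * PI) = 1) by lra.
  destruct (Rle_dec 0 (cos (IZR z * PI))).
  - rewrite Rabs_right by lra. nra.
  - rewrite Rabs_left by lra. nra.
Qed.

Lemma sd_shift a b (z : Z) : sd a (b + IZR z * PI) = sd a b.
Proof.
  unfold sd. replace (a - (b + IZR z * PI)) with ((a - b) - IZR z * PI) by ring.
  rewrite sin_minus, sin_kPI, Rmult_0_r, Rminus_0_r, Rabs_mult, cos_kPI_abs. ring.
Qed.

Definition Gq (q : R * R) (y : R) : R := sin (y - fst q) * sin (snd q - y).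

Lemma Gq_alt q y : Gq q y = (cos (2 * y - fst q - snd q) - cos (snd q - fst q)) / 2.
Proof.
  unfold Gq. replace (2 * y - fst q - snd q) with ((y - fst q) - (snd q - y)) by ring.
  assert (E : snd q - fst q = (y - fst q) + (snd q - y)) by ring. rewrite E.
  rewrite cos_minus, cos_plus. field.
Qed.

Lemma Gq_lip q y y' : Rabs (Gq q y - Gq q y') <= sd y y'.
Proof.
  rewrite !Gq_alt.
  replace ((cos (2 * y - fst q - snd q) - cos (snd q - fst q)) / 2 -
           (cos (2 * y' - fst q - snd q) - cos (snd q - fst q)) / 2)
    with ((cos (2 * y - fst q - snd q) - cos (2 * y' - fst q - snd q)) / 2) by field.
  rewrite form2.
  replace ((2 * y - fst q - snd q - (2 * y' - fst q - snd q)) / 2) with (y - y') by field.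
  unfold sd. rewrite Rabs_div by lra. rewrite !Rabs_mult.
  pose proof (SIN_bound ((2 * y - fst q - snd q + (2 * y' - fst q - snd q)) / 2)).
  assert (Rabs (sin ((2 * y - fst q - snd q + (2 * y' - fst q - snd q)) / 2)) <= 1) by (apply Rabs_le; lra).
  rewrite (Rabs_left (-2)) by lra. rewrite (Rabs_right 2) by lra.
  pose proof (Rabs_pos (sin (y - y'))). nra.
Qed.

Lemma Gq_shift q y (z : Z) : Gq q (y + IZR z * PI) = Gq q y.
Proof.
  pose proof (Gq_lip q (y + IZR z * PI) y). rewrite sd_sym, sd_shift in H.
  unfold sd in H. rewrite Rminus_diag, sin_0, Rabs_R0 in H.
  pose proof (Rabs_pos (Gq q (y + IZR z * PI) - Gq q y)).
  assert (Rabs (Gq q (y + IZR z * PI) - Gq q y) = 0) by lra.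
  apply Rabs_eq_0 in H1. lra.
Qed.

Lemma shift_into (c y : R) : exists k : Z, c < y + IZR k * PI <= c + PI.
Proof.
  pose proof PI_RGT_0.
  exists (up ((c - y) / PI)). destruct (archimed ((c - y) / PI)) as [H1 H2].
  set (u := IZR (up ((c - y) / PI))) in *.
  assert (E : c - y = PI * ((c - y) / PI)) by (field; lra).
  split.
  - apply Rmult_lt_compat_l with (r := PI) in H1; [|lra]. nra.
  - assert (u <= (c - y) / PI + 1) by lra.
    apply Rmult_le_compat_l with (r := PI) in H0; [|lra]. nra.
Qed.

Lemma Gq_in_arc q y : fst q < snd q -> snd q - fst q <= PI -> 0 < Gq q y -> in_arc (fst q) (snd q) y.
Proof.
  intros Hlt Hle HG. destruct (shift_into (fst q) y) as [k Hk].
  rewrite <- (Gq_shift q y k) in HG. set (y' := y + IZR k * PI) in *.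
  unfold Gq in HG. exists k. fold y'.
  assert (Hs : 0 <= sin (y' - fst q)) by (apply sin_ge_0; lra).
  assert (Hs' : 0 < sin (y' - fst q)).
  { destruct Hs as [h|h]; auto. rewrite <- h in HG. lra. }
  assert (Hs2 : 0 < sin (snd q - y')).
  { destruct (Rlt_dec 0 (sin (snd q - y'))) as [h|h]; auto. exfalso.
    assert (sin (y' - fst q) * sin (snd q - y') <= 0).
    { apply Rmult_le_0_l; lra. }
    lra. }
  split; [lra|].
  destruct (Rlt_dec y' (snd q)) as [h|h]; auto. exfalso.
  destruct (Req_dec y' (snd q)) as [e|e].
  - rewrite e, Rminus_diag, sin_0 in Hs2. lra.
  - assert (sin (snd q - y') < 0) by (apply sin_lt_0_var; lra). lra.
Qed.

Lemma in_arc_Gq q y : snd q - fst q <= PI -> in_arc (fst q) (snd q) y -> 0 < Gq q y.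
Proof.
  intros Hle [z Hz]. rewrite <- (Gq_shift q y z). unfold Gq.
  apply Rmult_lt_0_compat; apply sin_gt_0; lra.
Qed.

Definition Gmax (arcs : list (R * R)) (y : R) : R :=
  fold_right (fun q acc => Rmax (Gq q y) acc) 0 arcs.

Lemma Gmax_lip1 arcs y y' : Gmax arcs y <= Gmax arcs y' + sd y y'.
Proof.
  induction arcs as [|q arcs IH]; simpl.
  - pose proof (sd_pos y y'). lra.
  - apply Rmax_lub.
    + pose proof (Gq_lip q y y'). apply Rabs_le_between in H.
      pose proof (Rmax_l (Gq q y') (Gmax arcs y')). unfold Gmax in *. lra.
    + pose proof (Rmax_r (Gq q y') (Gmax arcs y')). unfold Gmax in *. lra.
Qed.

Lemma Gmax_lip arcs y y' : Rabs (Gmax arcs y - Gmax arcs y') <= sd y y'.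
Proof.
  pose proof (Gmax_lip1 arcs y y'). pose proof (Gmax_lip1 arcs y' y). rewrite sd_sym in H0.
  apply Rabs_le. lra.
Qed.

Lemma Gmax_pos arcs y : 0 < Gmax arcs y -> exists q, In q arcs /\ 0 < Gq q y.
Proof.
  induction arcs as [|q arcs IH]; simpl; [lra|].
  unfold Rmax. destruct (Rle_dec _ _); intros H.
  - destruct (IH H) as [q' [? ?]]. eauto.
  - eauto.
Qed.

Lemma Gmax_ge arcs q y : In q arcs -> Gq q y <= Gmax arcs y.
Proof.
  induction arcs as [|q' arcs IH]; simpl; [tauto|].
  intros [<-|H].
  - apply Rmax_l.
  - eapply Rle_trans; [apply IH; auto| apply Rmax_r].
Qed.

Lemma fin_min {T} (l : list T) (Q : T -> R -> Prop) :
  (forall p r r', Q p r -> 0 < r' <= r -> Q p r') ->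
  (forall p, In p l -> exists r, 0 < r /\ Q p r) ->
  exists r, 0 < r /\ forall p, In p l -> Q p r.
Proof.
  intros Hmono. induction l as [|a l IH]; intros H.
  - exists 1. split; [lra|]. intros p [].
  - destruct (H a (or_introl eq_refl)) as [ra [Hra Qa]].
    destruct IH as [r [Hr Hq]]. { intros p Hp. apply H. right; auto. }
    exists (Rmin ra r). split. { apply Rmin_pos; auto. }
    intros p [<-|Hp].
    + apply (Hmono _ ra); auto. split; [apply Rmin_pos; auto| apply Rmin_l].
    + apply (Hmono _ r); auto. split; [apply Rmin_pos; auto| apply Rmin_r].
Qed.

Lemma lip_cont (f : R -> R) (K x : R) : 0 <= K -> (forall a b, Rabs (f a - f b) <= K * Rabs (a - b)) ->
  continuity_pt f x.
Proof.
  intros HK Hf. unfold continuity_pt, continue_in, limit1_in, limit_in. intros eps Heps.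
  exists (eps / (K + 1)). split. { apply Rdiv_lt_0_compat; lra. }
  intros y [_ Hy]. simpl in *. unfold Rdist in *.
  eapply Rle_lt_trans; [apply Hf|].
  apply Rle_lt_trans with ((K + 1) * Rabs (y - x)). { pose proof (Rabs_pos (y - x)). nra. }
  apply Rmult_lt_compat_l with (r := K + 1) in Hy; [|lra].
  replace ((K + 1) * (eps / (K + 1))) with eps in Hy by (field; lra). lra.
Qed.

Lemma phi1_lip A i x x' : det2 (A i) = 1 ->
  sd (phiA (A i) x) (phiA (A i) x') <= Fb (matw A (i :: nil)) ^ 2 * sd x x'.
Proof.
  intros Hd.
  assert (Hd' : det2 (matw A (i :: nil)) = 1).
  { simpl. rewrite det2_mmul, Hd. unfold det2, mid; simpl; ring. }
  pose proof (word_identity A (i :: nil) x x' Hd') as E. simpl in E.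
  change (phiw A (i :: nil) x) with (phiA (A i) x) in E.
  change (phiw A (i :: nil) x') with (phiA (A i) x') in E.
  change (fold_right (fun (i0 : nat) (g : R -> R) (t : R) => phiA (A i0) (g t)) (fun t : R => t) (i :: nil) x)
    with (phiA (A i) x) in E.
  change (fold_right (fun (i0 : nat) (g : R -> R) (t : R) => phiA (A i0) (g t)) (fun t : R => t) (i :: nil) x')
    with (phiA (A i) x') in E.
  pose proof (Nv_lower _ x Hd'). pose proof (Nv_lower _ x' Hd').
  pose proof (Nv_pos (matw A (i :: nil)) x). pose proof (Nv_pos (matw A (i :: nil)) x').
  pose proof (sd_pos (phiA (A i) x) (phiA (A i) x')).
  simpl in *.
  set (N1 := Nv (mmul (A i) mid) x) in *. set (N2 := Nv (mmul (A i) mid) x') in *.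
  set (F := Fb (mmul (A i) mid)) in *.
  set (s := sd (phiA (A i) x) (phiA (A i) x')) in *.
  rewrite <- E.
  assert (1 <= N1 * F * (N2 * F)) by nra.
  assert (0 <= s * (N1 * F * (N2 * F) - 1)) by nra. nra.
Qed.

Lemma U_closure (U : R -> Prop) x : U x -> closure_set U x.
Proof. intros H eps He. exists x. split; auto. rewrite Rminus_diag, Rabs_R0. auto. Qed.

Lemma carc_closure (U : R -> Prop) arcs q x :
  (forall x, U x <-> exists p, In p arcs /\ in_arc (fst p) (snd p) x) ->
  In q arcs -> fst q < snd q -> fst q <= x <= snd q -> closure_set U x.
Proof.
  intros HU Hq Hlt Hx eps He.
  set (c := fst q) in *. set (d := snd q) in *.
  set (mid := (c + d) / 2).
  set (t := Rmin 1 (eps / (2 * (d - c)))).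
  assert (Ht : 0 < t <= 1).
  { unfold t. split. apply Rmin_pos; [lra|]. apply Rdiv_lt_0_compat; lra. apply Rmin_l. }
  assert (Ht2 : t * (d - c) < eps).
  { assert (t <= eps / (2 * (d - c))) by apply Rmin_r.
    apply Rmult_le_compat_r with (r := d - c) in H; [|lra].
    replace (eps / (2 * (d - c)) * (d - c)) with (eps / 2) in H by (field; lra). lra. }
  exists ((1 - t) * x + t * mid). split.
  - apply HU. exists q. split; auto. exists 0%Z. simpl. unfold mid. fold c d.
    split; nra.
  - replace (x - ((1 - t) * x + t * mid)) with (t * (x - mid)) by ring.
    rewrite Rabs_mult, Rabs_right by lra.
    assert (Rabs (x - mid) <= d - c) by (apply Rabs_le; unfold mid; lra). nra.
Qed.

Lemma arc_len (U : R -> Prop) arcs :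
  (forall x, U x <-> exists p, In p arcs /\ in_arc (fst p) (snd p) x) ->
  (exists x, ~ U x) -> forall q, In q arcs -> snd q - fst q <= PI.
Proof.
  intros HU [x0 Hx0] q Hq. destruct (Rle_dec (snd q - fst q) PI) as [h|h]; auto.
  exfalso. apply Hx0. apply HU. exists q. split; auto.
  destruct (shift_into (fst q) x0) as [k Hk]. exists k. lra.
Qed.

Lemma key_a (m : nat) (A : nat -> mat2) (U : R -> Prop) :
  (forall i, (i < m)%nat -> det2 (A i) = 1) -> multicone U -> strictly_invariant m A U ->
  exists k1, 0 < k1 /\ forall i, (i < m)%nat -> forall x p, closure_set U x -> sd x p < k1 ->
    U (phiA (A i) p).
Proof.
  intros Hdet [arcs [Hne [Hlt [HU [_ Hx0]]]]] Hinv.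
  rewrite Forall_forall in Hlt.
  pose proof (arc_len U arcs HU Hx0) as Hlen.
  set (G := Gmax arcs).
  assert (HGU : forall y, 0 < G y -> U y).
  { intros y Hy. destruct (Gmax_pos _ _ Hy) as [q [Hq Hg]]. apply HU. exists q. split; auto.
    apply Gq_in_arc; auto. }
  assert (HUG : forall y, U y -> 0 < G y).
  { intros y Hy. apply HU in Hy. destruct Hy as [q [Hq Ha]].
    eapply Rlt_le_trans; [apply (in_arc_Gq q y); auto|]. apply Gmax_ge; auto. }
  destruct (fin_min (seq 0 m) (fun i k => forall x p, closure_set U x -> sd x p < k -> U (phiA (A i) p)))
    as [k [Hk Hall]].
  - intros i r r' H [H1 H2]. cbv beta in *. intros x p Hx Hs. apply (H x p Hx). lra.
  - intros i Hi. apply in_seq in Hi. assert (Him : (i < m)%nat) by lia.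
    set (L := Fb (matw A (i :: nil)) ^ 2).
    assert (HL : 0 <= L) by (unfold L; apply pow2_ge_0).
    set (h := fun x => G (phiA (A i) x)).
    assert (Hlip : forall a b, Rabs (h a - h b) <= L * sd a b).
    { intros a b. unfold h. eapply Rle_trans; [apply Gmax_lip|]. apply phi1_lip. auto. }
    assert (Hlip2 : forall a b, Rabs (h a - h b) <= L * Rabs (a - b)).
    { intros a b. eapply Rle_trans; [apply Hlip|]. apply Rmult_le_compat_l; auto. apply sd_le_abs. }
    destruct (fin_min arcs (fun q r => forall x, fst q <= x <= snd q -> r <= h x)) as [rho [Hrho Hq]].
    + intros q r r' H [H1 H2] x Hx. specialize (H x Hx). lra.
    + intros q Hq.
      destruct (continuity_ab_min h (fst q) (snd q)) as [mx [Hmx Hmxb]].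
      * specialize (Hlt q Hq). lra.
      * intros c _. apply (lip_cont h L); auto.
      * exists (h mx). split; auto.
        unfold h. apply HUG. apply Hinv; auto.
        apply (carc_closure U arcs q); auto.
    + assert (HK : forall x, closure_set U x -> rho <= h x).
      { intros x Hx. destruct (Rle_dec rho (h x)) as [r|r]; auto. exfalso.
        set (eps := (rho - h x) / (2 * (L + 1))).
        assert (Heps : 0 < eps) by (unfold eps; apply Rdiv_lt_0_compat; lra).
        destruct (Hx eps Heps) as [y [Hy Hxy]].
        apply HU in Hy. destruct Hy as [q [Hq' [z Hz]]].
        assert (H1 : rho <= h (y + IZR z * PI)) by (apply (Hq q Hq'); lra).
        assert (H2 : Rabs (h x - h (y + IZR z * PI)) <= L * Rabs (x - y)).
        { eapply Rle_trans; [apply Hlip|]. rewrite sd_shift. apply Rmult_le_compat_l; auto. apply sd_le_abs. }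
        apply Rabs_le_between in H2.
        assert (L * Rabs (x - y) <= L * eps) by (apply Rmult_le_compat_l; lra).
        assert (L * eps < rho - h x).
        { unfold eps. apply Rlt_le_trans with ((L+1) * ((rho - h x) / (2 * (L + 1)))).
          - apply Rmult_lt_compat_r; [|lra]. apply Rdiv_lt_0_compat; lra.
          - replace ((L + 1) * ((rho - h x) / (2 * (L + 1)))) with ((rho - h x) / 2) by (field; lra). lra. }
        lra. }
      exists (rho / (L + 1)). split. { apply Rdiv_lt_0_compat; lra. }
      intros x p Hx Hs. apply HGU. fold (h p).
      specialize (HK x Hx). specialize (Hlip x p). apply Rabs_le_between in Hlip.
      assert (L * sd x p <= L * (rho / (L + 1))) by (apply Rmult_le_compat_l; lra).
      assert (L * (rho / (L + 1)) < rho).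
      { apply Rlt_le_trans with ((L+1) * (rho / (L + 1))).
        - apply Rmult_lt_compat_r; [|lra]. apply Rdiv_lt_0_compat; lra.
        - right. field. lra. }
      lra.
  - exists k. split; auto. intros i Hi. apply Hall. apply in_seq. lia.
Qed.

Lemma sd_zero a b : sd a b = 0 -> exists k : Z, a = b + IZR k * PI.
Proof.
  intros H. unfold sd in H. apply Rabs_eq_0 in H. apply sin_eq_0_0 in H.
  destruct H as [k Hk]. exists k. lra.
Qed.

Lemma sd_congr a a' b : sd a a' = 0 -> sd a b = sd a' b.
Proof.
  intros H. pose proof (sd_triangle a a' b). pose proof (sd_triangle a' a b).
  assert (sd a' a = 0) by (rewrite sd_sym; auto). lra.
Qed.

Lemma preimage A w f : det2 (matw A w) = 1 -> exists p, sd (phiw A w p) f = 0.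
Proof.
  intros Hd. set (M := matw A w) in *.
  set (Mi := Mat2 (a22 M) (- a12 M) (- a21 M) (a11 M)).
  destruct (polar (apply_x Mi f) (apply_y Mi f)) as [r [E1 E2]].
  set (p := line_angle (apply_x Mi f) (apply_y Mi f)) in *.
  exists p.
  destruct (vec_struct A w p) as [r' [F1 F2]]. fold M in F1, F2.
  assert (G1 : r * apply_x M p = cos f).
  { unfold apply_x at 1. replace (r * (a11 M * cos p + a12 M * sin p)) with (a11 M * (r * cos p) + a12 M * (r * sin p)) by ring.
    rewrite <- E1, <- E2. unfold Mi, apply_x, apply_y; simpl. unfold det2 in Hd.
    replace (a11 M * (a22 M * cos f + - a12 M * sin f) + a12 M * (- a21 M * cos f + a11 M * sin f))
      with ((a11 M * a22 M - a12 M * a21 M) * cos f) by ring. rewrite Hd. ring. }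
  assert (G2 : r * apply_y M p = sin f).
  { unfold apply_y at 1. replace (r * (a21 M * cos p + a22 M * sin p)) with (a21 M * (r * cos p) + a22 M * (r * sin p)) by ring.
    rewrite <- E1, <- E2. unfold Mi, apply_x, apply_y; simpl. unfold det2 in Hd.
    replace (a21 M * (a22 M * cos f + - a12 M * sin f) + a22 M * (- a21 M * cos f + a11 M * sin f))
      with ((a11 M * a22 M - a12 M * a21 M) * sin f) by ring. rewrite Hd. ring. }
  unfold sd. rewrite sin_minus. rewrite <- G1, <- G2, F1, F2.
  replace (sin (phiw A w p) * (r * (r' * cos (phiw A w p))) - cos (phiw A w p) * (r * (r' * sin (phiw A w p)))) with 0 by ring.
  apply Rabs_R0.
Qed.

Lemma U_shift (U : R -> Prop) arcs :
  (forall x, U x <-> exists p, In p arcs /\ in_arc (fst p) (snd p) x) ->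
  forall y k, U (y + IZR k * PI) -> U y.
Proof.
  intros HU y k H. apply HU in H. destruct H as [q [Hq [z Hz]]]. apply HU. exists q. split; auto.
  exists (k + z)%Z. rewrite plus_IZR. lra.
Qed.

Lemma K_inv m A U : strictly_invariant m A U -> forall w, List.Forall (fun i => (i < m)%nat) w ->
  forall y, closure_set U y -> closure_set U (phiw A w y).
Proof.
  intros Hinv w Hw. induction Hw as [|j l Hj Hl IH]; intros y Hy; simpl; auto.
  apply U_closure. apply Hinv; auto.
Qed.

Lemma U_inv_last m A U : strictly_invariant m A U -> forall w j, List.Forall (fun i => (i < m)%nat) w ->
  forall y, U (phiA (A j) y) -> U (phiw A (w ++ j :: nil) y).
Proof.
  intros Hinv w j Hw. induction Hw as [|i l Hi Hl IH]; intros y Hy; simpl; auto.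
  apply Hinv; auto. apply U_closure. apply IH. auto.
Qed.

Lemma main_ineq (m : nat) (A : nat -> mat2) (U : R -> Prop) :
  (0 < m)%nat ->
  (forall i, (i < m)%nat -> det2 (A i) = 1) -> multicone U -> strictly_invariant m A U ->
  exists ka, 0 < ka <= 1 /\ forall n w x, is_word m n w -> closure_set U x ->
    ka * opnorm (matw A w) <= Nv (matw A w) x.
Proof.
  intros Hm Hdet HM Hinv.
  destruct (key_a m A U Hdet HM Hinv) as [k1 [Hk1 Hka]].
  destruct HM as [arcs [Hne [Hlt [HU [_ [f0 Hf0]]]]]].
  rewrite Forall_forall in Hlt.
  assert (Hdw : forall w, List.Forall (fun i => (i < m)%nat) w -> det2 (matw A w) = 1)
    by (intros; apply (det_matw m); auto).
  assert (StepA : forall w, w <> nil -> List.Forall (fun i => (i < m)%nat) w ->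
     exists p, sd (phiw A w p) f0 = 0 /\ forall x, closure_set U x -> k1 <= sd x p).
  { intros w Hne' Hw. destruct (preimage A w f0 (Hdw w Hw)) as [p Hp]. exists p. split; auto.
    intros x Hx. destruct (Rle_dec k1 (sd x p)) as [h|h]; auto. exfalso.
    destruct (exists_last Hne') as [w'' [j Hwj]]. subst w.
    apply Forall_app in Hw. destruct Hw as [Hw1 Hw2]. inversion Hw2; subst.
    assert (U (phiA (A j) p)) by (apply (Hka j H1 x p Hx); lra).
    assert (U (phiw A (w'' ++ j :: nil) p)) by (apply (U_inv_last m); auto).
    destruct (sd_zero _ _ Hp) as [k Hk]. rewrite Hk in H0. apply Hf0. apply (U_shift U arcs HU f0 k); auto. }
  destruct (fin_min (seq 0 m) (fun i d => forall y, closure_set U y -> d <= sd (phiA (A i) y) f0)) as [de [Hde HB]].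
  { intros i r r' H [H1 H2]. cbv beta in *. intros y Hy. specialize (H y Hy). lra. }
  { intros i Hi. apply in_seq in Hi. assert (Him : (i < m)%nat) by lia.
    assert (Hw : List.Forall (fun i => (i < m)%nat) (i :: nil)) by (constructor; auto).
    destruct (StepA (i :: nil) ltac:(discriminate) Hw) as [q [Hq Hq2]].
    set (F := Fb (matw A (i :: nil))).
    assert (HF : 0 < F) by (apply Fb_pos; auto).
    exists (k1 / (F * F)). split. { apply Rdiv_lt_0_compat; nra. }
    intros y Hy.
    pose proof (word_identity A (i :: nil) y q (Hdw _ Hw)) as E.
    change (phiw A (i :: nil) y) with (phiA (A i) y) in E.
    change (phiw A (i :: nil) q) with (phiA (A i) q) in E, Hq.
    rewrite (sd_sym (phiA (A i) y) f0). rewrite <- (sd_congr _ _ (phiA (A i) y) Hq). rewrite sd_sym.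
    specialize (Hq2 y Hy).
    pose proof (Nv_lower _ y (Hdw _ Hw)). pose proof (Nv_lower _ q (Hdw _ Hw)).
    fold F in H, H0.
    pose proof (Nv_pos (matw A (i :: nil)) y). pose proof (Nv_pos (matw A (i :: nil)) q).
    pose proof (sd_pos (phiA (A i) y) (phiA (A i) q)).
    apply Rmult_le_reg_r with (F * F); [nra|].
    replace (k1 / (F * F) * (F * F)) with k1 by (field; lra).
    set (s := sd (phiA (A i) y) (phiA (A i) q)) in *.
    set (N1 := Nv (matw A (i :: nil)) y) in *. set (N2 := Nv (matw A (i :: nil)) q) in *.
    assert (N1 * N2 <= F * F).
    { assert (N1 <= F) by apply Nv_le_Fb. assert (N2 <= F) by apply Nv_le_Fb. nra. }
    assert (N1 * N2 * s <= F * F * s) by (apply Rmult_le_compat_r; auto). lra. }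
  assert (HB' : forall i, (i < m)%nat -> forall y, closure_set U y -> de <= sd (phiA (A i) y) f0).
  { intros i Hi. apply HB. apply in_seq. lia. }
  assert (StepC : exists eta, 0 < eta /\ forall x, exists p, closure_set U p /\ eta <= sd x p).
  { destruct arcs as [|q0 arcs']; [congruence|].
    assert (Hq0 : fst q0 < snd q0) by (apply Hlt; left; auto).
    set (L := Rmin (snd q0 - fst q0) 1).
    assert (HL : 0 < L <= snd q0 - fst q0 /\ L <= 1).
    { unfold L. split; [split|]. apply Rmin_pos; lra. apply Rmin_l. apply Rmin_r. }
    set (q1 := fst q0 + L / 4). set (q2 := fst q0 + 3 * L / 4).
    assert (Hq1 : closure_set U q1).
    { apply U_closure. apply HU. exists q0. split; [left; auto|]. exists 0%Z. unfold q1. simpl. lra. }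
    assert (Hq2 : closure_set U q2).
    { apply U_closure. apply HU. exists q0. split; [left; auto|]. exists 0%Z. unfold q2. simpl. lra. }
    assert (Hs : 0 < sd q2 q1).
    { unfold sd, q1, q2. replace (fst q0 + 3 * L / 4 - (fst q0 + L / 4)) with (L / 2) by field.
      rewrite Rabs_right. apply sin_gt_0; pose proof PI2_1; lra.
      left. apply sin_gt_0; pose proof PI2_1; lra. }
    exists (sd q2 q1 / 2). split; [lra|]. intros x.
    pose proof (sd_triangle q2 x q1). rewrite (sd_sym q2 x) in H.
    destruct (Rle_dec (sd q2 q1 / 2) (sd x q1)).
    - exists q1. auto.
    - exists q2. split; auto. lra. }
  destruct StepC as [eta [Heta HC]].
  set (ka := Rmin 1 (Rmin (k1 * de / 2) (eta * de / 2))).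
  assert (Hka0 : 0 < ka).
  { unfold ka. repeat apply Rmin_pos; try lra; apply Rmult_lt_0_compat; nra. }
  assert (Hka1 : ka <= 1) by apply Rmin_l.
  assert (Hka2 : ka <= k1 * de / 2) by (unfold ka; eapply Rle_trans; [apply Rmin_r|apply Rmin_l]).
  assert (Hka3 : ka <= eta * de / 2) by (unfold ka; eapply Rle_trans; [apply Rmin_r|apply Rmin_r]).
  exists ka. split; [lra|].
  intros n w x [Hlen Hw] Hx.
  destruct w as [|i1 w'].
  - simpl. assert (Hmid : forall t, Nv mid t = 1).
    { intros t. pose proof (sin2_cos2 t). unfold Rsqr in H. unfold Nv.
      transitivity (sqrt 1); [f_equal; unfold apply_x, apply_y, mid; simpl; nra | apply sqrt_1]. }
    rewrite Hmid. assert (opnorm mid <= 1) by (apply opnorm_le; intros; rewrite Hmid; lra).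
    pose proof (opnorm_ge mid 0). rewrite Hmid in H0. nra.
  - set (w := i1 :: w') in *.
    assert (Hd : det2 (matw A w) = 1) by (apply Hdw; auto).
    assert (Hi1 : (i1 < m)%nat) by (inversion Hw; auto).
    assert (Hw' : List.Forall (fun i => (i < m)%nat) w') by (inversion Hw; auto).
    set (N := Nv (matw A w)).
    assert (Npos : forall t, 0 < N t) by (intros; apply Nv_gt0; auto).
    assert (Hz : forall z, ka * N z <= N x).
    { intros z.
      set (y := phiw A w z).
      destruct (Rle_dec (de / 2) (sd y f0)) as [c1|c1].
      - destruct (StepA w ltac:(discriminate) Hw) as [p [Hp Hp2]].
        specialize (Hp2 x Hx).
        pose proof (word_identity A w x p Hd) as E1.
        pose proof (word_identity A w z p Hd) as E2. fold N in E1, E2.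
        assert (S1 : sd (phiw A w z) (phiw A w p) = sd y f0).
        { fold y. rewrite (sd_sym y), (sd_sym y). apply sd_congr. auto. }
        rewrite S1 in E2.
        pose proof (sd_le1 (phiw A w x) (phiw A w p)). pose proof (sd_le1 z p).
        pose proof (sd_pos (phiw A w x) (phiw A w p)).
        pose proof (Npos x). pose proof (Npos z). pose proof (Npos p).
        assert (k1 <= N x * N p) by (assert (N x * N p * sd (phiw A w x) (phiw A w p) <= N x * N p * 1) by (apply Rmult_le_compat_l; nra); lra).
        assert (N z * N p * (de / 2) <= 1) by (assert (N z * N p * (de / 2) <= N z * N p * sd y f0) by (apply Rmult_le_compat_l; nra); lra).
        assert (ka * N z * N p <= N x * N p).
        { apply Rle_trans with (k1 * de / 2 * N z * N p). { apply Rmult_le_compat_r; [lra|]. apply Rmult_le_compat_r; lra. }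
          replace (k1 * de / 2 * N z * N p) with (k1 * (N z * N p * (de / 2))) by (unfold Rdiv; ring).
          assert (k1 * (N z * N p * (de / 2)) <= k1 * 1) by (apply Rmult_le_compat_l; lra). lra. }
        apply Rmult_le_reg_r with (N p); [apply Npos| lra].
      - destruct (HC x) as [p [Hp Hp2]].
        pose proof (word_identity A w x p Hd) as E1.
        pose proof (word_identity A w z p Hd) as E2. fold N in E1, E2.
        assert (S1 : de <= sd (phiw A w p) f0).
        { unfold w. simpl. apply HB'; auto. apply (K_inv m A U Hinv); auto. }
        assert (S2 : de / 2 <= sd (phiw A w z) (phiw A w p)).
        { pose proof (sd_triangle (phiw A w p) (phiw A w z) f0).
          assert (sd (phiw A w p) (phiw A w z) = sd (phiw A w z) (phiw A w p)) by apply sd_sym.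
          fold y in H, H0 |- *. lra. }
        pose proof (sd_le1 (phiw A w x) (phiw A w p)). pose proof (sd_le1 z p).
        pose proof (sd_pos (phiw A w x) (phiw A w p)).
        pose proof (Npos x). pose proof (Npos z). pose proof (Npos p).
        assert (eta <= N x * N p) by (assert (N x * N p * sd (phiw A w x) (phiw A w p) <= N x * N p * 1) by (apply Rmult_le_compat_l; nra); lra).
        assert (N z * N p * (de / 2) <= 1) by (assert (N z * N p * (de / 2) <= N z * N p * sd (phiw A w z) (phiw A w p)) by (apply Rmult_le_compat_l; nra); lra).
        assert (ka * N z * N p <= N x * N p).
        { apply Rle_trans with (eta * de / 2 * N z * N p). { apply Rmult_le_compat_r; [lra|]. apply Rmult_le_compat_r; lra. }
          replace (eta * de / 2 * N z * N p) with (eta * (N z * N p * (de / 2))) by (unfold Rdiv; ring).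
          assert (eta * (N z * N p * (de / 2)) <= eta * 1) by (apply Rmult_le_compat_l; lra). lra. }
        apply Rmult_le_reg_r with (N p); [apply Npos| lra]. }
    assert (opnorm (matw A w) <= N x / ka).
    { apply opnorm_le. intros t. specialize (Hz t). apply Rmult_le_reg_l with ka; auto.
      replace (ka * (N x / ka)) with (N x) by (field; lra). exact Hz. }
    apply Rmult_le_compat_l with (r := ka) in H; [|lra].
    replace (ka * (N x / ka)) with (N x) in H by (field; lra). exact H.
Qed.

Lemma dcirc_Nv A w t : det2 (matw A w) = 1 -> dcirc (phiw A w) t = / Nv (matw A w) t ^ 2.
Proof. intros Hd. rewrite dcirc_matw, Nv_sq; auto. Qed.

Lemma word_det m A n w : (forall i, (i < m)%nat -> det2 (A i) = 1) -> is_word m n w -> det2 (matw A w) = 1.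
Proof. intros H [_ Hw]. apply (det_matw m); auto. Qed.

Lemma pow2n (x : R) n : x ^ (2 * n) = (x ^ n) ^ 2.
Proof. rewrite <- pow_mult. f_equal. lia. Qed.

Section Parts.
Variables (m : nat) (A : nat -> mat2) (U : R -> Prop) (c lam : R).
Hypotheses (Hm : (0 < m)%nat) (Hdet : forall i, (i < m)%nat -> det2 (A i) = 1)
  (HM : multicone U) (Hinv : strictly_invariant m A U) (Hc : 0 < c) (Hlam : 1 < lam)
  (Hnorm : forall n w, (1 <= n)%nat -> is_word m n w -> opnorm (matw A w) >= c * lam ^ n).

Lemma part_i_ka ka : 0 < ka <= 1 -> (forall n w x, is_word m n w -> closure_set U x ->
    ka * opnorm (matw A w) <= Nv (matw A w) x) ->
  exists C', 1 < C' /\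
     forall n w x y, is_word m n w -> closure_set U x -> closure_set U y ->
       / C' <= Rabs (dcirc (phiw A w) x) / Rabs (dcirc (phiw A w) y) <= C'.
Proof.
  intros Hka Hmain.
  exists (/ ka ^ 2 + 1). split.
  { assert (0 < / ka ^ 2) by (apply Rinv_0_lt_compat; nra). lra. }
  intros n w x y Hw Hx Hy.
  assert (Hd := word_det m A n w Hdet Hw).
  rewrite !dcirc_Nv by auto.
  set (M := matw A w) in *.
  assert (Px : 0 < Nv M x) by (apply Nv_gt0; auto).
  assert (Py : 0 < Nv M y) by (apply Nv_gt0; auto).
  assert (Bx : ka * Nv M y <= Nv M x).
  { eapply Rle_trans; [|apply (Hmain n w x Hw Hx)]. apply Rmult_le_compat_l; [lra|]. apply opnorm_ge. }
  assert (By : ka * Nv M x <= Nv M y).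
  { eapply Rle_trans; [|apply (Hmain n w y Hw Hy)]. apply Rmult_le_compat_l; [lra|]. apply opnorm_ge. }
  rewrite !Rabs_right by (left; apply Rinv_0_lt_compat; nra).
  replace (/ Nv M x ^ 2 / / Nv M y ^ 2) with ((Nv M y / Nv M x) ^ 2) by (field; lra).
  set (r := Nv M y / Nv M x).
  assert (Hr1 : ka <= r).
  { unfold r. apply Rmult_le_reg_r with (Nv M x); auto. replace (Nv M y / Nv M x * Nv M x) with (Nv M y) by (field; lra).
    assert (ka * Nv M x <= 1 * Nv M x) by (apply Rmult_le_compat_r; lra). lra. }
  assert (Hr2 : ka * r <= 1).
  { unfold r. replace (ka * (Nv M y / Nv M x)) with ((ka * Nv M y) / Nv M x) by (field; lra).
    apply Rmult_le_reg_r with (Nv M x); auto. replace (ka * Nv M y / Nv M x * Nv M x) with (ka * Nv M y) by (field; lra). lra. }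
  assert (Hk2 : 0 < ka ^ 2) by nra.
  split.
  - apply Rle_trans with (ka ^ 2).
    + apply Rmult_le_reg_l with (/ ka ^ 2 + 1). { assert (0 < / ka ^ 2) by (apply Rinv_0_lt_compat; nra). lra. }
      rewrite Rinv_r by (assert (0 < / ka ^ 2) by (apply Rinv_0_lt_compat; nra); lra).
      replace ((/ ka ^ 2 + 1) * ka ^ 2) with (1 + ka ^ 2) by (field; lra). lra.
    + nra.
  - apply Rle_trans with (/ ka ^ 2); [|lra].
    apply Rmult_le_reg_l with (ka ^ 2); auto. rewrite Rinv_r by lra.
    replace (ka ^ 2 * r ^ 2) with ((ka * r) ^ 2) by ring.
    assert (0 <= ka * r) by nra. nra.
Qed.

Lemma pointwise_ii ka : 0 < ka <= 1 -> (forall n w x, is_word m n w -> closure_set U x ->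
    ka * opnorm (matw A w) <= Nv (matw A w) x) ->
  forall n w x, is_word m n w -> closure_set U x ->
    Rabs (dcirc (phiw A w) x) <= Rmax 1 (/ (ka * c) ^ 2) * / lam ^ (2 * n).
Proof.
  intros Hka Hmain n w x Hw Hx.
  assert (Hd := word_det m A n w Hdet Hw).
  rewrite dcirc_Nv by auto.
  assert (Px : 0 < Nv (matw A w) x) by (apply Nv_gt0; auto).
  rewrite Rabs_right by (left; apply Rinv_0_lt_compat; nra).
  destruct n as [|n].
  - destruct Hw as [Hl _]. destruct w; [|simpl in Hl; lia].
    simpl. assert (Nv mid x = 1).
    { pose proof (sin2_cos2 x). unfold Rsqr in H. unfold Nv.
      transitivity (sqrt 1); [f_equal; unfold apply_x, apply_y, mid; simpl; nra | apply sqrt_1]. }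
    simpl in H. rewrite H. pose proof (Rmax_l 1 (/ (ka * c) ^ 2)). simpl in *. replace (1 * (1 * 1)) with 1 by ring. rewrite Rinv_1. lra.
  - pose proof (Hnorm (S n) w ltac:(lia) Hw) as Hn.
    pose proof (Hmain _ _ _ Hw Hx) as Hm1.
    assert (Hl : 0 < lam ^ S n) by (apply pow_lt; lra).
    assert (H1 : ka * (c * lam ^ S n) <= Nv (matw A w) x).
    { eapply Rle_trans; [|apply Hm1]. apply Rmult_le_compat_l; lra. }
    assert (H2 : 0 < ka * (c * lam ^ S n)) by (apply Rmult_lt_0_compat; [lra|]; apply Rmult_lt_0_compat; lra).
    apply Rle_trans with (/ (ka * (c * lam ^ S n)) ^ 2).
    + apply Rinv_le_contravar; [nra|]. apply pow_incr. lra.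
    + rewrite pow2n. replace ((ka * (c * lam ^ S n)) ^ 2) with ((ka * c) ^ 2 * (lam ^ S n) ^ 2) by ring.
      rewrite Rinv_mult. apply Rmult_le_compat_r. { left; apply Rinv_0_lt_compat; nra. }
      apply Rmax_r.
Qed.

End Parts.

Definition lsum {T} (f : T -> R) (l : list T) : R := fold_right Rplus 0 (map f l).

Lemma lsum_app {T} (f : T -> R) l1 l2 : lsum f (l1 ++ l2) = lsum f l1 + lsum f l2.
Proof. induction l1; unfold lsum in *; simpl; [ring|]. rewrite IHl1. ring. Qed.

Lemma lsum_concat {T} (f : T -> R) (L : list (list T)) : lsum f (concat L) = lsum (lsum f) L.
Proof. induction L as [|a L IH]; [reflexivity|]. simpl. rewrite lsum_app, IH. reflexivity. Qed.

Lemma lsum_map {T U} (f : U -> R) (g : T -> U) l : lsum f (map g l) = lsum (fun x => f (g x)) l.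
Proof. unfold lsum. rewrite map_map. auto. Qed.

Lemma lsum_le {T} (f g : T -> R) l : (forall x, In x l -> f x <= g x) -> lsum f l <= lsum g l.
Proof. induction l; intros H; unfold lsum in *; simpl; [lra|].
  apply Rplus_le_compat. apply H; left; auto. apply IHl. intros; apply H; right; auto. Qed.

Lemma lsum_ext {T} (f g : T -> R) l : (forall x, In x l -> f x = g x) -> lsum f l = lsum g l.
Proof. induction l; intros H; unfold lsum in *; simpl; [lra|].
  rewrite H by (left; auto). rewrite IHl; auto. intros; apply H; right; auto. Qed.

Lemma lsum_scal {T} (f : T -> R) k l : lsum (fun x => k * f x) l = k * lsum f l.
Proof. induction l; unfold lsum in *; simpl; [ring|]. rewrite IHl. ring. Qed.

Lemma lsum_pos {T} (f : T -> R) l : l <> nil -> (forall x, In x l -> 0 < f x) -> 0 < lsum f l.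
Proof. induction l; intros Hne H; [congruence|]. unfold lsum in *; simpl.
  destruct l.
  - simpl. rewrite Rplus_0_r. apply H. left; auto.
  - apply Rplus_lt_0_compat. apply H; left; auto. apply IHl. discriminate. intros; apply H; right; auto. Qed.

Lemma lsum_const {T} k (l : list T) : lsum (fun _ => k) l = INR (length l) * k.
Proof. induction l as [|a l IHl]; [unfold lsum; simpl; ring|]. change (lsum (fun _ => k) (a :: l)) with (k + lsum (fun _ => k) l). rewrite IHl. change (length (a :: l)) with (S (length l)). rewrite S_INR. ring. Qed.

Lemma sum_words_lsum m n f : sum_words m n f = lsum f (all_words m n).
Proof. reflexivity. Qed.

Lemma sum_words_S m n f : sum_words m (S n) f = lsum (fun i => sum_words m n (fun w => f (i :: w))) (seq 0 m).
Proof.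
  rewrite sum_words_lsum. simpl. rewrite lsum_concat, lsum_map. apply lsum_ext. intros i _.
  rewrite lsum_map. reflexivity.
Qed.

Lemma sum_words_0 m f : sum_words m 0 f = f nil.
Proof. unfold sum_words; simpl. ring. Qed.

Lemma all_words_is_word m n w : In w (all_words m n) -> is_word m n w.
Proof.
  revert w. induction n; intros w H; simpl in H.
  - destruct H as [<-|[]]. split; auto.
  - apply in_concat in H. destruct H as [l [H1 H2]]. apply in_map_iff in H1.
    destruct H1 as [i [<- Hi]]. apply in_map_iff in H2. destruct H2 as [w' [<- Hw']].
    apply in_seq in Hi. destruct (IHn w' Hw') as [Hl Hf]. split; simpl; auto. constructor; auto. lia.
Qed.

Lemma all_words_ne m n : (0 < m)%nat -> all_words m n <> nil.
Proof.
  intros Hm. induction n; simpl; [discriminate|].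
  destruct m as [|m']; [lia|]. simpl. destruct (all_words (S m') n) eqn:E; [congruence|]. simpl. discriminate.
Qed.

Lemma sum_words_le m n f g : (forall w, is_word m n w -> f w <= g w) -> sum_words m n f <= sum_words m n g.
Proof. intros H. apply lsum_le. intros; apply H, all_words_is_word; auto. Qed.

Lemma sum_words_scal m n f k : sum_words m n (fun w => k * f w) = k * sum_words m n f.
Proof. apply lsum_scal. Qed.

Lemma sum_words_pos m n f : (0 < m)%nat -> (forall w, is_word m n w -> 0 < f w) -> 0 < sum_words m n f.
Proof. intros Hm H. apply lsum_pos. apply all_words_ne; auto. intros; apply H, all_words_is_word; auto. Qed.

Lemma sum_words_const m n k : sum_words m n (fun _ => k) = INR m ^ n * k.
Proof.
  revert k. induction n; intros k.
  - rewrite sum_words_0. simpl. ring.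
  - rewrite sum_words_S. rewrite (lsum_ext _ (fun _ => INR m ^ n * k)) by (intros; apply IHn).
    rewrite lsum_const, seq_length. simpl. ring.
Qed.

Lemma sum_words_add m n k h : sum_words m (n + k) h = sum_words m n (fun u => sum_words m k (fun v => h (u ++ v))).
Proof.
  revert h. induction n; intros h.
  - simpl. rewrite sum_words_0. reflexivity.
  - simpl. rewrite !sum_words_S. apply lsum_ext. intros i _. rewrite IHn. reflexivity.
Qed.

Lemma almost_add (a : nat -> R) e : 0 <= e ->
  (forall n k, (1 <= n)%nat -> (1 <= k)%nat -> Rabs (a (n + k)%nat - a n - a k) <= e) ->
  exists P, forall n, (1 <= n)%nat -> Rabs (a n - INR n * P) <= e.
Proof.
  intros He H.
  assert (Hc : forall j k, (1 <= j)%nat -> (1 <= k)%nat -> INR j * (a k - e) <= a (j * k)%nat - e).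
  { intros j k Hj Hk. induction j as [|j IH]; [lia|].
    destruct (Nat.eq_dec j 0) as [->|Hj0].
    - simpl. replace (k + 0)%nat with k by lia. lra.
    - specialize (IH ltac:(lia)). replace (S j * k)%nat with (j * k + k)%nat by lia.
      pose proof (H (j * k)%nat k ltac:(nia) Hk) as Hjk. apply Rabs_le_between in Hjk.
      rewrite S_INR. lra. }
  assert (Hd : forall j k, (1 <= j)%nat -> (1 <= k)%nat -> a (j * k)%nat + e <= INR j * (a k + e)).
  { intros j k Hj Hk. induction j as [|j IH]; [lia|].
    destruct (Nat.eq_dec j 0) as [->|Hj0].
    - simpl. replace (k + 0)%nat with k by lia. lra.
    - specialize (IH ltac:(lia)). replace (S j * k)%nat with (j * k + k)%nat by lia.
      pose proof (H (j * k)%nat k ltac:(nia) Hk) as Hjk. apply Rabs_le_between in Hjk.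
      rewrite S_INR. lra. }
  assert (Hcd : forall n k, (1 <= n)%nat -> (1 <= k)%nat -> (a k - e) / INR k <= (a n + e) / INR n).
  { intros n k Hn Hk.
    assert (0 < INR n) by (apply lt_0_INR; lia). assert (0 < INR k) by (apply lt_0_INR; lia).
    pose proof (Hc n k Hn Hk). pose proof (Hd k n Hk Hn). rewrite Nat.mul_comm in H3.
    apply Rmult_le_reg_r with (INR n * INR k); [nra|].
    replace ((a k - e) / INR k * (INR n * INR k)) with (INR n * (a k - e)) by (field; lra).
    replace ((a n + e) / INR n * (INR n * INR k)) with (INR k * (a n + e)) by (field; lra). lra. }
  set (E := fun x => exists k, (1 <= k)%nat /\ x = (a k - e) / INR k).
  exists (real (Lub_Rbar E)). intros n Hn.
  assert (0 < INR n) by (apply lt_0_INR; lia).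
  assert (L1 : (a n - e) / INR n <= real (Lub_Rbar E)).
  { apply (lub_ub E ((a 1%nat + e) / INR 1)). exists n; auto.
    intros y [k [Hk ->]]. apply Hcd; auto. }
  assert (L2 : real (Lub_Rbar E) <= (a n + e) / INR n).
  { apply lub_le. exists ((a 1%nat - e) / INR 1), 1%nat. auto.
    intros y [k [Hk ->]]. apply Hcd; auto. }
  apply Rmult_le_compat_r with (r := INR n) in L1; [|lra].
  apply Rmult_le_compat_r with (r := INR n) in L2; [|lra].
  replace ((a n - e) / INR n * INR n) with (a n - e) in L1 by (field; lra).
  replace ((a n + e) / INR n * INR n) with (a n + e) in L2 by (field; lra).
  apply Rabs_le. lra.
Qed.

Lemma inv_n_lim : is_lim_seq (fun n => / INR n) 0.
Proof.
  pose proof (is_lim_seq_inv _ _ is_lim_seq_INR ltac:(discriminate)). simpl in H. exact H.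
Qed.

Lemma lim_from_bound (a : nat -> R) P e :
  (forall n, (1 <= n)%nat -> Rabs (a n - INR n * P) <= e) ->
  is_lim_seq (fun n => / INR n * a n) P.
Proof.
  intros H.
  apply is_lim_seq_le_le_loc with (u := fun n => P - e * / INR n) (w := fun n => P + e * / INR n).
  - exists 1%nat. intros n Hn. specialize (H n Hn).
    assert (0 < INR n) by (apply lt_0_INR; lia).
    apply Rabs_le_between in H.
    replace (/ INR n * a n) with (a n / INR n) by (unfold Rdiv; ring).
    split.
    + apply Rmult_le_reg_r with (INR n); auto.
      replace ((P - e * / INR n) * INR n) with (INR n * P - e) by (field; lra).
      replace (a n / INR n * INR n) with (a n) by (field; lra). lra.
    + apply Rmult_le_reg_r with (INR n); auto.
      replace ((P + e * / INR n) * INR n) with (INR n * P + e) by (field; lra).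
      replace (a n / INR n * INR n) with (a n) by (field; lra). lra.
  - assert (H0 : is_lim_seq (fun n => e * / INR n) 0).
    { pose proof (is_lim_seq_scal_l _ e _ inv_n_lim) as H1. simpl in H1. replace (e * 0) with 0 in H1 by ring. exact H1. }
    pose proof (is_lim_seq_minus' _ _ P 0 (is_lim_seq_const P) H0) as H1.
    replace (P - 0) with P in H1 by ring. exact H1.
  - assert (H0 : is_lim_seq (fun n => e * / INR n) 0).
    { pose proof (is_lim_seq_scal_l _ e _ inv_n_lim) as H1. simpl in H1. replace (e * 0) with 0 in H1 by ring. exact H1. }
    pose proof (is_lim_seq_plus' _ _ P 0 (is_lim_seq_const P) H0) as H1.
    replace (P + 0) with P in H1 by ring. exact H1.
Qed.

Lemma arch_le0 x K : (forall n, (1 <= n)%nat -> INR n * x <= K) -> x <= 0.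
Proof.
  intros H. destruct (Rle_dec x 0) as [h|h]; auto. exfalso.
  destruct (INR_unbounded (Rabs K / x)) as [n Hn].
  destruct n as [|n]. { simpl in Hn. assert (0 <= Rabs K / x) by (apply Rdiv_le_0_compat; [apply Rabs_pos|lra]). lra. }
  specialize (H (S n) ltac:(lia)).
  apply Rmult_gt_compat_r with (r := x) in Hn; [|lra].
  replace (Rabs K / x * x) with (Rabs K) in Hn by (field; lra).
  pose proof (Rle_abs K). lra.
Qed.

Lemma exp_le x y : x <= y -> exp x <= exp y.
Proof. intros [h|h]; [left; apply exp_increasing; auto| subst; lra]. Qed.

Lemma exp_INR_mult n x : exp (INR n * x) = exp x ^ n.
Proof. induction n; [simpl; rewrite Rmult_0_l, exp_0; auto|]. rewrite S_INR.
  replace ((INR n + 1) * x) with (INR n * x + x) by ring. rewrite exp_plus, IHn. simpl. ring. Qed.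

Lemma Nv_mid t : Nv mid t = 1.
Proof. pose proof (sin2_cos2 t). unfold Rsqr in H. unfold Nv.
  transitivity (sqrt 1); [f_equal; unfold apply_x, apply_y, mid; simpl; nra | apply sqrt_1]. Qed.

Lemma opnorm_mid : opnorm mid = 1.
Proof. apply Rle_antisym. apply opnorm_le; intros; rewrite Nv_mid; lra.
  rewrite <- (Nv_mid 0). apply opnorm_ge. Qed.

Lemma term_bound X Y W k t : 0 < X -> 0 < Y -> 0 < k <= 1 -> k * (X * Y) <= W -> W <= X * Y ->
  exp (- (Rabs t * - ln k)) * (Rpower X (- t) * Rpower Y (- t)) <= Rpower W (- t) <=
  exp (Rabs t * - ln k) * (Rpower X (- t) * Rpower Y (- t)).
Proof.
  intros HX HY Hk H1 H2.
  assert (HXY : 0 < X * Y) by (apply Rmult_lt_0_compat; auto).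
  assert (HW : 0 < W) by (assert (0 < k * (X * Y)) by (apply Rmult_lt_0_compat; lra); lra).
  assert (Hlk : ln k <= 0) by (rewrite <- ln_1; apply ln_le; lra).
  assert (L1 : ln k + ln X + ln Y <= ln W).
  { rewrite <- !ln_mult by nra. apply ln_le; [nra|]. lra. }
  assert (L2 : ln W <= ln X + ln Y).
  { rewrite <- ln_mult by nra. apply ln_le; lra. }
  unfold Rpower. rewrite <- !exp_plus.
  set (th := ln W - ln X - ln Y).
  assert (Hth : Rabs (- t * th) <= Rabs t * - ln k).
  { rewrite Rabs_mult, Rabs_Ropp. apply Rmult_le_compat_l; [apply Rabs_pos|].
    unfold th. apply Rabs_le. lra. }
  apply Rabs_le_between in Hth.
  replace (- t * ln W) with (- t * ln X + - t * ln Y + - t * th) by (unfold th; ring).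
  split; apply exp_le; lra.
Qed.

Section Press.
Variables (m : nat) (A : nat -> mat2) (U : R -> Prop) (c lam ka : R).
Hypotheses (Hm : (0 < m)%nat) (Hdet : forall i, (i < m)%nat -> det2 (A i) = 1)
  (HM : multicone U) (Hinv : strictly_invariant m A U) (Hc : 0 < c) (Hlam : 1 < lam)
  (Hnorm : forall n w, (1 <= n)%nat -> is_word m n w -> opnorm (matw A w) >= c * lam ^ n)
  (Hka : 0 < ka <= 1)
  (Hmain : forall n w x, is_word m n w -> closure_set U x -> ka * opnorm (matw A w) <= Nv (matw A w) x).

Definition nu (w : list nat) := opnorm (matw A w).

Lemma K_ne : exists x0, closure_set U x0.
Proof.
  destruct HM as [arcs [Hne [Hlt [HU _]]]]. destruct arcs as [|q arcs]; [congruence|].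
  inversion Hlt; subst. exists ((fst q + snd q) / 2). apply U_closure. apply HU.
  exists q. split; [left; auto|]. exists 0%Z. simpl. lra.
Qed.

Lemma nu_pos n w : is_word m n w -> 0 < nu w.
Proof. intros Hw. unfold nu. eapply Rlt_le_trans; [apply (Nv_gt0 (matw A w) 0)|apply opnorm_ge].
  apply (word_det m A n w Hdet Hw). Qed.

Lemma nu_nonneg w : 0 <= nu w.
Proof. unfold nu. eapply Rle_trans; [apply (Nv_pos (matw A w) 0)|apply opnorm_ge]. Qed.

Lemma nu_sub u v : nu (u ++ v) <= nu u * nu v.
Proof.
  unfold nu. apply opnorm_le. intros t. rewrite Nv_app.
  apply Rmult_le_compat; try apply Nv_pos; apply opnorm_ge.
Qed.

Lemma is_word_app n k u v : is_word m n u -> is_word m k v -> is_word m (n + k) (u ++ v).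
Proof. intros [H1 H2] [H3 H4]. split. rewrite length_app; lia. apply Forall_app; auto. Qed.

Lemma nu_super n k u v : is_word m n u -> is_word m k v -> ka ^ 2 * (nu u * nu v) <= nu (u ++ v).
Proof.
  intros Hu Hv. destruct K_ne as [x0 Hx0].
  unfold nu. eapply Rle_trans; [|apply (opnorm_ge _ x0)]. rewrite Nv_app.
  assert (Hy : closure_set U (phiw A v x0)) by (apply (K_inv m A U Hinv); auto; apply Hv).
  pose proof (Hmain _ _ _ Hu Hy). pose proof (Hmain _ _ _ Hv Hx0).
  pose proof (nu_nonneg u). pose proof (nu_nonneg v). unfold nu in *.
  replace (ka ^ 2 * (opnorm (matw A u) * opnorm (matw A v))) with ((ka * opnorm (matw A u)) * (ka * opnorm (matw A v))) by ring.
  apply Rmult_le_compat; auto; nra.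
Qed.

Definition Lam := fold_right (fun i acc => Rmax (nu (i :: nil)) acc) 1 (seq 0 m).

Lemma Lam_ge l : forall i, In i l -> nu (i :: nil) <= fold_right (fun i acc => Rmax (nu (i :: nil)) acc) 1 l.
Proof. induction l; simpl; [tauto|]. intros i [<-|H]. apply Rmax_l. eapply Rle_trans; [apply IHl; auto|apply Rmax_r]. Qed.

Lemma Lam_ge1 l : 1 <= fold_right (fun i acc => Rmax (nu (i :: nil)) acc) 1 l.
Proof. induction l; simpl; [lra|]. eapply Rle_trans; [apply IHl|apply Rmax_r]. Qed.

Lemma nu_Lam n w : is_word m n w -> nu w <= Lam ^ n.
Proof.
  revert w. induction n; intros w [Hl Hf].
  - destruct w; [|simpl in Hl; lia]. unfold nu; simpl. rewrite opnorm_mid. lra.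
  - destruct w as [|i w]; [simpl in Hl; lia|]. inversion Hf; subst.
    change (i :: w) with ((i :: nil) ++ w). eapply Rle_trans; [apply nu_sub|].
    simpl. apply Rmult_le_compat; try apply nu_nonneg.
    + apply Lam_ge. apply in_seq. lia.
    + apply IHn. split; auto.
Qed.

Definition Z n t := sum_words m n (fun w => Rpower (nu w) (- t)).

Lemma Z_pos n t : 0 < Z n t.
Proof. apply sum_words_pos; auto. intros; apply exp_pos. Qed.

Definition ee t := Rabs t * - ln (ka ^ 2).

Lemma ee_nonneg t : 0 <= ee t.
Proof. unfold ee. apply Rmult_le_pos; [apply Rabs_pos|]. assert (ln (ka ^ 2) <= 0) by (rewrite <- ln_1; apply ln_le; nra). lra. Qed.

Lemma Z_mult n k t : exp (- ee t) * (Z n t * Z k t) <= Z (n + k) t <= exp (ee t) * (Z n t * Z k t).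
Proof.
  unfold Z. rewrite sum_words_add.
  replace (sum_words m n (fun w => Rpower (nu w) (- t)) * sum_words m k (fun w => Rpower (nu w) (- t)))
    with (sum_words m n (fun u => sum_words m k (fun v => Rpower (nu u) (- t) * Rpower (nu v) (- t)))).
  2:{ rewrite Rmult_comm. rewrite <- sum_words_scal. apply lsum_ext. intros u _.
      rewrite Rmult_comm. rewrite <- sum_words_scal. reflexivity. }
  rewrite <- !sum_words_scal. split; apply sum_words_le; intros u Hu; rewrite <- !sum_words_scal;
    apply sum_words_le; intros v Hv;
    pose proof (term_bound (nu u) (nu v) (nu (u ++ v)) (ka ^ 2) t (nu_pos _ _ Hu) (nu_pos _ _ Hv)
      ltac:(split; nra) (nu_super _ _ _ _ Hu Hv) (nu_sub u v)); unfold ee; lra.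
Qed.

Lemma lnZ_almost t : forall n k, (1 <= n)%nat -> (1 <= k)%nat ->
  Rabs (ln (Z (n + k) t) - ln (Z n t) - ln (Z k t)) <= ee t.
Proof.
  intros n k _ _. destruct (Z_mult n k t) as [H1 H2].
  pose proof (Z_pos n t). pose proof (Z_pos k t). pose proof (Z_pos (n + k) t).
  assert (0 < Z n t * Z k t) by (apply Rmult_lt_0_compat; auto).
  apply ln_le in H1; [|apply Rmult_lt_0_compat; [apply exp_pos|auto]].
  apply ln_le in H2; auto.
  rewrite ln_mult, ln_exp, ln_mult in H1, H2 by (auto; apply exp_pos).
  apply Rabs_le. lra.
Qed.

Definition Pf t := real (Lim_seq (fun n => / INR n * ln (Z n t))).

Lemma Pf_bound t : forall n, (1 <= n)%nat -> Rabs (ln (Z n t) - INR n * Pf t) <= ee t.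
Proof.
  destruct (almost_add (fun n => ln (Z n t)) (ee t) (ee_nonneg t) (lnZ_almost t)) as [P HP].
  assert (Pf t = P).
  { unfold Pf. rewrite (is_lim_seq_unique _ _ (lim_from_bound _ _ _ HP)). reflexivity. }
  rewrite H. exact HP.
Qed.

Lemma PM1 t t' : t <= t' -> Pf t' <= Pf t - (t' - t) * ln lam.
Proof.
  intros Ht.
  assert (Hb : forall n, (1 <= n)%nat -> ln (Z n t') <= ln (Z n t) - (t' - t) * (ln c + INR n * ln lam)).
  { intros n Hn.
    assert (Z n t' <= Z n t * exp (- (t' - t) * (ln c + INR n * ln lam))).
    { unfold Z. rewrite Rmult_comm, <- sum_words_scal. apply sum_words_le. intros w Hw.
      pose proof (Hnorm n w Hn Hw) as Hn'. fold (nu w) in Hn'.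
      assert (Hcl : 0 < c * lam ^ n) by (apply Rmult_lt_0_compat; [lra|apply pow_lt; lra]).
      assert (ln (c * lam ^ n) <= ln (nu w)) by (apply ln_le; lra).
      rewrite ln_mult, ln_pow in H by (try apply pow_lt; lra).
      unfold Rpower. rewrite <- exp_plus. apply exp_le.
      assert (0 <= (t' - t) * (ln (nu w) - (ln c + INR n * ln lam))) by (apply Rmult_le_pos; lra). nra. }
    pose proof (Z_pos n t'). pose proof (Z_pos n t).
    apply ln_le in H; auto. rewrite ln_mult, ln_exp in H by (auto; apply exp_pos). lra. }
  assert (Hl : 0 < ln lam) by (rewrite <- ln_1; apply ln_increasing; lra).
  assert (X : Pf t' - Pf t + (t' - t) * ln lam <= 0).
  { apply (arch_le0 _ (ee t + ee t' - (t' - t) * ln c)). intros n Hn.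
    specialize (Hb n Hn). pose proof (Pf_bound t n Hn). pose proof (Pf_bound t' n Hn).
    apply Rabs_le_between in H. apply Rabs_le_between in H0. nra. }
  lra.
Qed.

Lemma Lam_pos : 1 <= Lam.
Proof. apply Lam_ge1. Qed.

Lemma PM2 t t' : t <= t' -> Pf t - (t' - t) * ln Lam <= Pf t'.
Proof.
  intros Ht.
  assert (HL : 0 <= ln Lam) by (rewrite <- ln_1; apply ln_le; [lra|apply Lam_pos]).
  assert (Hb : forall n, (1 <= n)%nat -> ln (Z n t) - (t' - t) * (INR n * ln Lam) <= ln (Z n t')).
  { intros n Hn.
    assert (Z n t * exp (- (t' - t) * (INR n * ln Lam)) <= Z n t').
    { unfold Z. rewrite Rmult_comm, <- sum_words_scal. apply sum_words_le. intros w Hw.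
      pose proof (nu_Lam n w Hw). pose proof (nu_pos n w Hw).
      assert (ln (nu w) <= ln (Lam ^ n)) by (apply ln_le; lra).
      rewrite ln_pow in H1 by (pose proof Lam_pos; lra).
      unfold Rpower. rewrite <- exp_plus. apply exp_le.
      assert (0 <= (t' - t) * (INR n * ln Lam - ln (nu w))) by (apply Rmult_le_pos; lra). nra. }
    pose proof (Z_pos n t'). pose proof (Z_pos n t).
    apply ln_le in H; [|apply Rmult_lt_0_compat; auto; apply exp_pos].
    rewrite ln_mult, ln_exp in H by (auto; apply exp_pos). lra. }
  assert (X : Pf t - (t' - t) * ln Lam - Pf t' <= 0).
  { apply (arch_le0 _ (ee t + ee t')). intros n Hn.
    specialize (Hb n Hn). pose proof (Pf_bound t n Hn). pose proof (Pf_bound t' n Hn).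
    apply Rabs_le_between in H. apply Rabs_le_between in H0. nra. }
  lra.
Qed.

Lemma P0 : 0 <= Pf 0.
Proof.
  assert (HZ : forall n, Z n 0 = INR m ^ n).
  { intros n. unfold Z. transitivity (sum_words m n (fun _ => 1)).
    - apply lsum_ext. intros w _. unfold Rpower. rewrite Ropp_0, Rmult_0_l. apply exp_0.
    - rewrite sum_words_const. ring. }
  assert (Hm1 : 1 <= INR m) by (apply (le_INR 1); lia).
  assert (Hlm : 0 <= ln (INR m)) by (rewrite <- ln_1; apply ln_le; lra).
  assert (X : ln (INR m) - Pf 0 <= 0).
  { apply (arch_le0 _ (ee 0)). intros n Hn. pose proof (Pf_bound 0 n Hn).
    rewrite HZ, ln_pow in H by lra. apply Rabs_le_between in H. nra. }
  lra.
Qed.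

Lemma series_iff t : ~ ex_series (fun n => Z (S n) t) <-> 0 <= Pf t.
Proof.
  split.
  - intros H. destruct (Rle_dec 0 (Pf t)) as [h|h]; auto. exfalso. apply H.
    set (q := exp (Pf t)).
    assert (Hq : 0 < q < 1) by (unfold q; split; [apply exp_pos|rewrite <- exp_0; apply exp_increasing; lra]).
    apply (@ex_series_le R_AbsRing R_CompleteNormedModule _ (fun n => exp (ee t + Pf t) * q ^ n)).
    + intros n. pose proof (Pf_bound t (S n) ltac:(lia)). apply Rabs_le_between in H0.
      pose proof (Z_pos (S n) t).
      change (norm (Z (S n) t)) with (Rabs (Z (S n) t)). rewrite Rabs_right by lra.
      rewrite <- (exp_ln (Z (S n) t)) by auto. unfold q. rewrite <- exp_INR_mult, <- exp_plus.
      apply exp_le. rewrite S_INR in H0. nra.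
    + apply (ex_series_ext (fun n => scal (exp (ee t + Pf t)) (q ^ n))). { intros; reflexivity. }
      apply (@ex_series_scal_l R_AbsRing R_NormedModule). apply ex_series_geom. rewrite Rabs_right; lra.
  - intros H Hs. apply ex_series_lim_0 in Hs.
    assert (Hle : forall n, exp (- ee t) <= Z (S n) t).
    { intros n. pose proof (Pf_bound t (S n) ltac:(lia)). apply Rabs_le_between in H0.
      pose proof (Z_pos (S n) t). rewrite <- (exp_ln (Z (S n) t)) by auto. apply exp_le.
      assert (0 <= INR (S n) * Pf t) by (apply Rmult_le_pos; auto; apply pos_INR). lra. }
    pose proof (is_lim_seq_le _ _ _ _ Hle (is_lim_seq_const _) Hs). simpl in H0.
    pose proof (exp_pos (- ee t)). lra.
Qed.


Lemma supnorm_bounds n w : is_word m n w ->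
  / nu w ^ 2 <= supnorm U (dcirc (phiw A w)) <= / (ka * nu w) ^ 2.
Proof.
  intros Hw. destruct K_ne as [x0 Hx0].
  assert (Hd := word_det m A n w Hdet Hw).
  pose proof (nu_pos n w Hw) as Hnu.
  assert (Hk : 0 < ka * nu w) by (apply Rmult_lt_0_compat; lra).
  assert (Hpt : forall x, closure_set U x -> Rabs (dcirc (phiw A w) x) <= / (ka * nu w) ^ 2).
  { intros x Hx. rewrite dcirc_Nv by auto. pose proof (Nv_gt0 (matw A w) x Hd).
    rewrite Rabs_right by (left; apply Rinv_0_lt_compat; nra).
    apply Rinv_le_contravar; [nra|]. apply pow_incr. split; [lra|]. apply Hmain with n; auto. }
  unfold supnorm. split.
  - eapply Rle_trans; [|apply (lub_ub _ (/ (ka * nu w) ^ 2) (Rabs (dcirc (phiw A w) x0)))].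
    + rewrite dcirc_Nv by auto. pose proof (Nv_gt0 (matw A w) x0 Hd).
      rewrite Rabs_right by (left; apply Rinv_0_lt_compat; nra).
      apply Rinv_le_contravar; [nra|]. apply pow_incr. split; [lra|]. apply opnorm_ge.
    + exists x0. auto.
    + intros y [x [Hx ->]]. apply Hpt; auto.
  - apply lub_le. { exists (Rabs (dcirc (phiw A w) x0)), x0. auto. }
    intros y [x [Hx ->]]. apply Hpt; auto.
Qed.

Definition es s := Rabs s * - ln (ka ^ 2).

Lemma pressure_lim s : is_lim_seq (fun n => / INR n *
     ln (sum_words m n (fun w => Rpower (supnorm U (dcirc (phiw A w))) s))) (Pf (2 * s)).
Proof.
  apply lim_from_bound with (e := es s + ee (2 * s)).
  intros n Hn.
  set (S := sum_words m n (fun w => Rpower (supnorm U (dcirc (phiw A w))) s)).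
  assert (Hlk : ln (ka ^ 2) <= 0) by (rewrite <- ln_1; apply ln_le; nra).
  assert (HS : exp (- es s) * Z n (2 * s) <= S <= exp (es s) * Z n (2 * s)).
  { unfold S, Z. rewrite <- !sum_words_scal. split; apply sum_words_le; intros w Hw;
    destruct (supnorm_bounds n w Hw) as [B1 B2];
    pose proof (nu_pos n w Hw) as Hnu;
    set (sg := supnorm U (dcirc (phiw A w))) in *;
    assert (Hsg : 0 < sg) by (eapply Rlt_le_trans; [|apply B1]; apply Rinv_0_lt_compat; nra);
    apply ln_le in B1; try (apply Rinv_0_lt_compat; nra);
    apply ln_le in B2; auto;
    rewrite ln_Rinv, (ln_pow (nu w)) in B1 by (try apply pow_lt; lra);
    rewrite ln_Rinv, Rpow_mult_distr, ln_mult, (ln_pow (nu w)) in B2 by (try apply pow_lt; nra);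
    unfold Rpower; rewrite <- exp_plus; apply exp_le;
    set (th := ln sg + INR 2 * ln (nu w));
    (assert (Hth : Rabs (s * th) <= es s) by
       (unfold es; rewrite Rabs_mult; apply Rmult_le_compat_l; [apply Rabs_pos|]; unfold th; apply Rabs_le; lra));
    apply Rabs_le_between in Hth; replace (s * ln sg) with (- (2 * s) * ln (nu w) + s * th) by (unfold th; simpl; ring); lra. }
  pose proof (Z_pos n (2 * s)).
  assert (HS0 : 0 < S) by (eapply Rlt_le_trans; [|apply HS]; apply Rmult_lt_0_compat; [apply exp_pos|auto]).
  destruct HS as [HS1 HS2].
  apply ln_le in HS1; [|apply Rmult_lt_0_compat; [apply exp_pos|auto]].
  apply ln_le in HS2; auto.
  rewrite ln_mult, ln_exp in HS1, HS2 by (auto; apply exp_pos).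
  pose proof (Pf_bound (2 * s) n Hn). apply Rabs_le_between in H0.
  apply Rabs_le. lra.
Qed.

Lemma pressure_iff s : pressure_zero m A U s <-> Pf (2 * s) = 0.
Proof.
  unfold pressure_zero. split.
  - intros H. pose proof (is_lim_seq_unique _ _ H). rewrite (is_lim_seq_unique _ _ (pressure_lim s)) in H0.
    injection H0. auto.
  - intros H. rewrite <- H. apply pressure_lim.
Qed.

Lemma crit_iff s : crit_exp m A = Finite (2 * s) <-> Pf (2 * s) = 0.
Proof.
  assert (Hl : 0 < ln lam) by (rewrite <- ln_1; apply ln_increasing; lra).
  assert (HL : 0 <= ln Lam) by (rewrite <- ln_1; apply ln_le; [lra|apply Lam_pos]).
  set (T := fun t => 0 <= t /\ 0 <= Pf t).
  assert (HT : crit_exp m A = Lub_Rbar T).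
  { unfold crit_exp. apply Lub_Rbar_eqset. intros t. unfold T. rewrite <- series_iff. reflexivity. }
  rewrite HT. pose proof P0 as HP0.
  split.
  - intros H. pose proof (Lub_Rbar_correct T) as [Hub Hlub]. rewrite H in Hub, Hlub.
    set (ts := 2 * s) in *.
    assert (Hts : 0 <= ts) by (apply (Hub 0); unfold T; split; lra).
    destruct (Rtotal_order (Pf ts) 0) as [h|[h|h]]; auto; exfalso.
    + set (d := - Pf ts / (2 * (ln Lam + 1))).
      assert (Hd : 0 < d) by (unfold d; apply Rdiv_lt_0_compat; lra).
      assert (Hdl : d * (ln Lam + 1) = - Pf ts / 2) by (unfold d; field; lra).
      specialize (Hlub (Finite (ts - d))). simpl in Hlub.
      assert (ts <= ts - d); [|lra]. apply Hlub. intros t [Ht0 Htp]. simpl.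
      destruct (Rle_dec t (ts - d)) as [r|r]; auto. exfalso.
      destruct (Rle_dec ts t) as [r2|r2].
      * pose proof (PM1 ts t r2). nra.
      * pose proof (PM2 t ts ltac:(lra)). nra.
    + set (d := Pf ts / (2 * (ln Lam + 1))).
      assert (Hd : 0 < d) by (unfold d; apply Rdiv_lt_0_compat; lra).
      assert (Hdl : d * (ln Lam + 1) = Pf ts / 2) by (unfold d; field; lra).
      pose proof (PM2 ts (ts + d) ltac:(lra)).
      assert (T (ts + d)) by (split; [lra|nra]).
      specialize (Hub _ H1). simpl in Hub. lra.
  - intros H. apply is_lub_Rbar_unique. split.
    + intros t [Ht0 Htp]. simpl. destruct (Rle_dec t (2 * s)) as [r|r]; auto. exfalso.
      pose proof (PM1 (2 * s) t ltac:(lra)). nra.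
    + intros b Hb. apply Hb. split; [|lra].
      destruct (Rle_dec 0 (2 * s)) as [r|r]; auto. exfalso.
      pose proof (PM1 (2 * s) 0 ltac:(lra)). nra.
Qed.

End Press.

Theorem lemma3p4 (m : nat) (A : nat -> mat2) (U : R -> Prop) (c lam : R) :
  (0 < m)%nat ->
  (forall i, (i < m)%nat -> det2 (A i) = 1) ->
  multicone U ->
  strictly_invariant m A U ->
  0 < c -> 1 < lam ->
  (forall n w, (1 <= n)%nat -> is_word m n w -> opnorm (matw A w) >= c * lam ^ n) ->
  (* (i) bounded distortion *)
  (exists C', 1 < C' /\
     forall n w x y, is_word m n w -> closure_set U x -> closure_set U y ->
       / C' <= Rabs (dcirc (phiw A w) x) / Rabs (dcirc (phiw A w) y) <= C') /\
  (* (ii) exponential decay of derivatives, and eventual contraction *)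
  (exists C'', 0 < C'' /\
     forall n w, is_word m n w -> supnorm U (dcirc (phiw A w)) <= C'' * / lam ^ (2 * n)) /\
  (exists K, forall k w x, (K <= k)%nat -> is_word m k w -> closure_set U x ->
       Rabs (dcirc (phiw A w) x) < 1) /\
  (* (iii) the zero of the pressure is s_A / 2 *)
  (forall s, pressure_zero m A U s <-> crit_exp m A = Finite (2 * s)).
Proof.
  intros Hm Hdet HM Hinv Hc Hlam Hnorm.
  destruct (main_ineq m A U Hm Hdet HM Hinv) as [ka [Hka Hmain]].
  pose proof (pointwise_ii m A U c lam Hm Hdet Hc Hlam Hnorm ka Hka Hmain) as Hpw.
  set (C2 := Rmax 1 (/ (ka * c) ^ 2)) in *.
  assert (HC2 : 1 <= C2) by apply Rmax_l.
  split; [exact (part_i_ka m A U Hdet ka Hka Hmain)|].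
  split.
  { exists C2. split; [lra|]. intros n w Hw. unfold supnorm. apply lub_le.
    - destruct (K_ne U HM) as [x0 Hx0]. exists (Rabs (dcirc (phiw A w) x0)), x0. auto.
    - intros y [x [Hx ->]]. apply (Hpw n w x Hw Hx). }
  split.
  { destruct (Pow_x_infinity lam ltac:(rewrite Rabs_right; lra) (2 * C2)) as [N HN].
    exists N. intros k w x Hk Hw Hx.
    specialize (HN k Hk). rewrite Rabs_right in HN by (left; apply pow_lt; lra).
    eapply Rle_lt_trans; [apply (Hpw k w x Hw Hx)|].
    assert (H1 : 1 <= lam ^ k) by (apply pow_R1_Rle; lra).
    rewrite pow2n.
    assert (lam ^ k <= (lam ^ k) ^ 2) by nra.
    apply Rmult_lt_reg_r with ((lam ^ k) ^ 2); [nra|].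
    rewrite Rmult_assoc, Rinv_l by nra. nra. }
  intros s. rewrite (pressure_iff m A U ka Hm Hdet HM Hinv Hka Hmain s),
    (crit_iff m A U c lam ka Hm Hdet HM Hinv Hc Hlam Hnorm Hka Hmain s). tauto.
Qed.
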